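(* Every nonzero proper ideal $\mathcal I$ of $C_{an}(S^1;\mathbf{R})$ is of the form $\mathfrak m_{p_1}^{a_1}\mathfrak m_{p_2}^{a_2}\cdots\mathfrak m_{p_n}^{a_n}$ for some points $p_1,\dots,p_n\in S^1$ and positive integers $a_1,\dots,a_n$. Specifically, $p_1,\dots,p_n$ are the common zeros of the elements of $\mathcal I$ and $a_k$ is the minimum, over nonzero $f\in\mathcal I$, of the order of vanishing of $f$ at $p_k$.
   Context: $S^1$ is identified with $\mathbf{R}/2\pi\mathbf{Z}$. $C_{an}(S^1;\mathbf{R})$ is the ring (under pointwise operations) of real-valued real-analytic functions on $S^1$, i.e. $2\pi$-periodic real-analytic functions $\mathbf{R}\to\mathbf{R}$. For $p\in S^1$, $\mathfrak m_p=\{f\in C_{an}(S^1;\mathbf{R}): f(p)=0\}$. *)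

(* Defs.v *)
From Stdlib Require Import Reals List.
Open Scope R_scope.

Definition real_analytic (f : R -> R) : Prop :=
  forall x0 : R, exists r : R, 0 < r /\ exists a : nat -> R,
    forall x : R, Rabs (x - x0) < r -> Pser a (x - x0) (f x).

(* Elements of C_an(S^1;R): 2*PI-periodic real-analytic functions R -> R. *)
Definition Can (f : R -> R) : Prop :=
  real_analytic f /\ forall x : R, f (x + 2 * PI) = f x.

(* Points of S^1 = R / 2 PI Z, represented by their representative in [0, 2 PI). *)
Definition S1pt (p : R) : Prop := 0 <= p < 2 * PI.

Definition is_ideal (I : (R -> R) -> Prop) : Prop :=
  (forall f, I f -> Can f) /\
  I (fun _ => 0) /\
  (forall f g, I f -> I g -> I (fun x => f x + g x)) /\
  (forall g f, Can g -> I f -> I (fun x => g x * f x)).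

Definition nonzero_fun (f : R -> R) : Prop := exists x, f x <> 0.

Definition mideal (p : R) (f : R -> R) : Prop := Can f /\ f p = 0.

Inductive idmul (I J : (R -> R) -> Prop) : (R -> R) -> Prop :=
| idmul0 : idmul I J (fun _ => 0)
| idmul_add : forall f g h, I f -> J g -> idmul I J h ->
    idmul I J (fun x => f x * g x + h x).

Fixpoint idpow (I : (R -> R) -> Prop) (a : nat) : (R -> R) -> Prop :=
  match a with
  | O => Can
  | S a' => idmul I (idpow I a')
  end.

Definition mprod (l : list (R * nat)) : (R -> R) -> Prop :=
  fold_right (fun pa J => idmul (idpow (mideal (fst pa)) (snd pa)) J) Can l.

Definition vanish_order (f : R -> R) (p : R) (n : nat) : Prop :=
  exists r : R, 0 < r /\ exists a : nat -> R,
    (forall x : R, Rabs (x - p) < r -> Pser a (x - p) (f x)) /\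
    (forall k, (k < n)%nat -> a k = 0) /\ a n <> 0.

(* Main.v *)
Require Import Defs.
From Stdlib Require Import Reals List Lra Lia Arith ZArith Classical ClassicalEpsilon FunctionalExtensionality PropExtensionality.
From Coquelicot Require Import Coquelicot.
Open Scope R_scope.

Definition LA (F : R -> R) (x0 r : R) : Prop :=
  0 < r /\ exists d : nat -> R, Rbar_le r (CV_radius d) /\
    forall x, Rabs (x - x0) < r -> F x = PSeries d (x - x0).

Lemma lim0_bounded (u : nat -> R) : is_lim_seq u 0 -> exists M, forall n, Rabs (u n) <= M.
Proof.
  intro H. apply is_lim_seq_Reals in H.
  apply cv_cvabs in H.
  assert (Hc : Cauchy_crit (fun i => Rabs (u i))) by (apply CV_Cauchy; exists (Rabs 0); exact H).
  apply cauchy_bound in Hc. destruct Hc as [M HM]. exists M. intro n. apply HM. exists n. reflexivity.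
Qed.
Lemma dummy_x : True. Proof.
exact I. Qed.

Lemma radius_ge (d : nat -> R) (r : R) : 0 < r ->
  (forall t, Rabs t < r -> ex_pseries d t) -> Rbar_le r (CV_radius d).
Proof.
  intros Hr H.
  pose proof (CV_radius_bounded d) as [Hub _].
  pose proof (CV_radius_ge_0 d) as H0.
  destruct (CV_radius d) as [c| |] eqn:Hc; simpl in *; try tauto.
  destruct (Rle_dec r c) as [h|h]; [exact h|exfalso].
  set (rho := (c + r)/2).
  assert (Hrho : Rabs rho < r) by (unfold rho; rewrite Rabs_pos_eq; lra).
  specialize (H rho Hrho). destruct H as [l Hl].
  apply is_pseries_R in Hl.
  assert (Hs : ex_series (fun n => d n * rho ^ n)) by (exists l; exact Hl).
  apply ex_series_lim_0 in Hs. apply lim0_bounded in Hs.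
  assert (Hle : Rbar_le rho c) by (apply Hub; exact Hs).
  simpl in Hle. unfold rho in Hle. lra.
Qed.

Lemma Rbar_lt_rad (t r : R) (c : Rbar) : Rabs t < r -> Rbar_le r c -> Rbar_lt (Rabs t) c.
Proof. intros H1 H2. eapply Rbar_lt_le_trans; [|exact H2]. exact H1. Qed.

Definition e1 : nat -> R := fun n => match n with O => 1 | _ => 0 end.

Lemma e1_rad : CV_radius e1 = p_infty.
Proof.
  rewrite <- CV_radius_decr_1.
  rewrite (CV_radius_ext _ (fun _ => 0)); [apply CV_radius_const_0|].
  intro n. reflexivity.
Qed.

Lemma e1_val t : PSeries e1 t = 1.
Proof.
  rewrite PSeries_decr_1.
  - rewrite (PSeries_ext _ (fun _ => 0)); [|intro n; reflexivity].
    rewrite PSeries_const_0. simpl. ring.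
  - apply CV_radius_inside. rewrite e1_rad. exact I.
Qed.

Lemma LA_const c x0 r : 0 < r -> LA (fun _ => c) x0 r.
Proof.
  intro Hr. split; [exact Hr|]. exists (PS_scal c e1). split.
    destruct (Req_dec c 0) as [->|hc].
    + rewrite (CV_radius_ext _ (fun _ => 0)). rewrite CV_radius_const_0. exact I.
      intro n. unfold PS_scal. simpl. change (0 * e1 n = 0). ring.
    + rewrite CV_radius_scal by exact hc. rewrite e1_rad. exact I.
  - intros x _. rewrite PSeries_scal, e1_val. ring.
Qed.

Lemma LA_idc x0 r : 0 < r -> LA (fun x => x - x0) x0 r.
Proof.
  intro Hr. split; [exact Hr|]. exists (PS_incr_1 e1). split.
  - rewrite CV_radius_incr_1, e1_rad. exact I.
  - intros x _. rewrite PSeries_incr_1, e1_val. ring.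
Qed.

Lemma LA_ext F G x0 r : LA F x0 r -> (forall x, Rabs (x - x0) < r -> F x = G x) -> LA G x0 r.
Proof.
  intros [Hr [d [Hd HF]]] H. split; [exact Hr|]. exists d. split; [exact Hd|].
  intros x Hx. rewrite <- H by exact Hx. apply HF, Hx.
Qed.

Lemma LA_shrink F x0 r r' : LA F x0 r -> 0 < r' -> r' <= r -> LA F x0 r'.
Proof.
  intros [Hr [d [Hd HF]]] H1 H2. split; [exact H1|]. exists d. split.
  - eapply Rbar_le_trans; [|exact Hd]. exact H2.
  - intros x Hx. apply HF. lra.
Qed.

Lemma LA_plus F G x0 r : LA F x0 r -> LA G x0 r -> LA (fun x => F x + G x) x0 r.
Proof.
  intros [Hr [d1 [Hd1 HF]]] [_ [d2 [Hd2 HG]]]. split; [exact Hr|].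
  exists (PS_plus d1 d2). split.
  - eapply Rbar_le_trans; [|apply CV_radius_plus].
    apply Rbar_min_case; assumption.
  - intros x Hx. rewrite PSeries_plus.
    + rewrite HF, HG by exact Hx. reflexivity.
    + apply CV_radius_inside. eapply Rbar_lt_rad; eassumption.
    + apply CV_radius_inside. eapply Rbar_lt_rad; eassumption.
Qed.

Lemma LA_mult F G x0 r : LA F x0 r -> LA G x0 r -> LA (fun x => F x * G x) x0 r.
Proof.
  intros [Hr [d1 [Hd1 HF]]] [_ [d2 [Hd2 HG]]]. split; [exact Hr|].
  exists (PS_mult d1 d2). split.
  - apply radius_ge; [exact Hr|]. intros t Ht.
    apply ex_pseries_mult; eapply Rbar_lt_rad; eassumption.
  - intros x Hx. rewrite PSeries_mult.
    + rewrite HF, HG by exact Hx. reflexivity.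
    + eapply Rbar_lt_rad; eassumption.
    + eapply Rbar_lt_rad; eassumption.
Qed.

Lemma LA_pow F x0 r n : LA F x0 r -> LA (fun x => F x ^ n) x0 r.
Proof.
  intro H. induction n.
  - simpl. apply LA_const. destruct H; assumption.
  - simpl. apply LA_mult; assumption.
Qed.

Lemma LA_at F x0 r : LA F x0 r -> exists d, Rbar_le r (CV_radius d) /\ F x0 = d O /\
   forall x, Rabs (x - x0) < r -> F x = PSeries d (x - x0).
Proof.
  intros [Hr [d [Hd HF]]]. exists d. repeat split; try assumption.
  rewrite HF. replace (x0 - x0) with 0 by ring. apply PSeries_0.
  replace (x0 - x0) with 0 by ring. rewrite Rabs_R0. exact Hr.
Qed.

Lemma LA_cont F x0 r : LA F x0 r -> forall eps, 0 < eps ->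
  exists delta, 0 < delta /\ forall x, Rabs (x - x0) < delta -> Rabs (F x - F x0) < eps.
Proof.
  intros HLA eps Heps. destruct HLA as [Hr [d [Hd HF]]].
  assert (Hc : continuity_pt (PSeries d) 0).
  { apply PSeries_continuity. rewrite Rabs_R0. eapply Rbar_lt_le_trans; [|exact Hd]. exact Hr. }
  destruct (Hc eps Heps) as [alp [Halp Hal]].
  exists (Rmin alp r). split; [apply Rmin_pos; assumption|].
  intros x Hx.
  assert (Hx1 : Rabs (x - x0) < r) by (eapply Rlt_le_trans; [exact Hx| apply Rmin_r]).
  assert (Hx0 : Rabs (x0 - x0) < r) by (replace (x0-x0) with 0 by ring; rewrite Rabs_R0; exact Hr).
  rewrite (HF x Hx1), (HF x0 Hx0). replace (x0 - x0) with 0 by ring.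
  destruct (Req_dec x x0) as [->|hne].
  - replace (x0 - x0) with 0 by ring. unfold Rminus. rewrite Rplus_opp_r, Rabs_R0. exact Heps.
  - apply (Hal (x - x0)). split.
    + split; [exact I|]. intro h. apply hne. lra.
    + simpl. unfold R_dist. replace (x - x0 - 0) with (x - x0) by ring.
      eapply Rlt_le_trans; [exact Hx|apply Rmin_l].
Qed.

Lemma least_nat (P : nat -> Prop) : (exists n, P n) -> exists n, P n /\ forall k, (k < n)%nat -> ~ P k.
Proof.
  intros [n Hn]. apply NNPP. intro Hno.
  assert (H : forall n k, (k <= n)%nat -> ~ P k).
  { induction n0 as [|n0 IH]; intros k Hk HP.
    - apply Hno. exists k. split; [exact HP|]. intros j Hj. lia.
    - destruct (Nat.eq_dec k (S n0)) as [->|hne].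
      + apply Hno. exists (S n0). split; [exact HP|]. intros j Hj. apply IH. lia.
      + apply (IH k); [lia|exact HP]. }
  exact (H n n (le_n n) Hn).
Qed.

Lemma LA_shift G p r c : LA G p r -> LA (fun x => G (x - c)) (p + c) r.
Proof.
  intros [Hr [d [Hd HG]]]. split; [exact Hr|]. exists d. split; [exact Hd|].
  intros x Hx. rewrite HG.
  - f_equal. ring.
  - replace (x - c - p) with (x - (p + c)) by ring. exact Hx.
Qed.

Lemma Pser_LA F x0 r a : 0 < r -> (forall x, Rabs (x - x0) < r -> Pser a (x - x0) (F x)) -> LA F x0 r.
Proof.
  intros Hr H. split; [exact Hr|]. exists a. split.
  - apply radius_ge; [exact Hr|]. intros t Ht. exists (F (x0 + t)).
    apply is_pseries_Reals. replace t with (x0 + t - x0) at 1 by ring. apply H.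
    replace (x0 + t - x0) with t by ring. exact Ht.
  - intros x Hx. symmetry. apply is_pseries_unique. apply is_pseries_Reals. apply H, Hx.
Qed.

Lemma LA_Pser F x0 r : LA F x0 r -> exists a, forall x, Rabs (x - x0) < r -> Pser a (x - x0) (F x).
Proof.
  intros [Hr [d [Hd HF]]]. exists d. intros x Hx. rewrite HF by exact Hx.
  apply is_pseries_Reals. apply PSeries_correct. apply CV_radius_inside.
  eapply Rbar_lt_rad; eassumption.
Qed.

Lemma LA_factor_d F x0 r d m : 0 < r -> Rbar_le r (CV_radius d) ->
  (forall x, Rabs (x - x0) < r -> F x = PSeries d (x - x0)) ->
  (forall k, (k < m)%nat -> d k = 0) ->
  exists G, LA G x0 r /\ G x0 = d m /\ forall x, Rabs (x - x0) < r -> F x = (x - x0) ^ m * G x.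
Proof.
  intros Hr Hd HF Hz.
  exists (fun x => PSeries (PS_decr_n d m) (x - x0)). split; [|split].
  - split; [exact Hr|]. exists (PS_decr_n d m). split; [|intros; reflexivity].
    apply radius_ge; [exact Hr|]. intros t Ht. apply ex_pseries_decr_n.
    + destruct (Req_dec t 0) as [->|ht]; [left; reflexivity|right].
      exists (/ t). change (/ t * t = 1). field. exact ht.
    + apply CV_radius_inside. eapply Rbar_lt_rad; eassumption.
  - replace (x0 - x0) with 0 by ring. rewrite PSeries_0. unfold PS_decr_n.
    f_equal. lia.
  - intros x Hx. rewrite HF by exact Hx. apply PSeries_decr_n_aux. exact Hz.
Qed.

Lemma LA_dich F x0 r : LA F x0 r ->
  (forall x, Rabs (x - x0) < r -> F x = 0) \/
  exists m G, LA G x0 r /\ G x0 <> 0 /\ forall x, Rabs (x - x0) < r -> F x = (x - x0) ^ m * G x.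
Proof.
  intros [Hr [d [Hd HF]]].
  destruct (classic (exists k, d k <> 0)) as [Hex|Hno].
  - right. destruct (least_nat _ Hex) as [m [Hm Hlt]].
    destruct (LA_factor_d F x0 r d m Hr Hd HF) as [G [HG [HG0 HFG]]].
    { intros k Hk. apply NNPP. exact (Hlt k Hk). }
    exists m, G. split; [exact HG|]. split; [rewrite HG0; exact Hm|exact HFG].
  - left. intros x Hx. rewrite HF by exact Hx.
    rewrite (PSeries_ext _ (fun _ => 0)); [apply PSeries_const_0|].
    intro n. apply NNPP. intro h. apply Hno. exists n. exact h.
Qed.

Lemma LA_nonzero_near G x0 r : LA G x0 r -> G x0 <> 0 ->
  exists delta, 0 < delta /\ forall x, Rabs (x - x0) < delta -> G x <> 0.
Proof.
  intros HG H0.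
  destruct (LA_cont G x0 r HG (Rabs (G x0))) as [dl [Hdl Hc]].
  { apply Rabs_pos_lt, H0. }
  exists dl. split; [exact Hdl|]. intros x Hx Hz. specialize (Hc x Hx).
  rewrite Hz in Hc. replace (0 - G x0) with (- G x0) in Hc by ring.
  rewrite Rabs_Ropp in Hc. lra.
Qed.

Lemma LA_punct_eq F H p r r' : LA F p r -> LA H p r' ->
  (exists e, 0 < e /\ forall x, 0 < Rabs (x - p) < e -> F x = H x) -> F p = H p.
Proof.
  intros HF HH [e [He Heq]].
  apply NNPP. intro hne.
  set (eps := Rabs (F p - H p) / 2).
  assert (Heps : 0 < eps) by (unfold eps; apply Rdiv_lt_0_compat; [apply Rabs_pos_lt; lra|lra]).
  destruct (LA_cont F p r HF eps Heps) as [d1 [Hd1 H1]].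
  destruct (LA_cont H p r' HH eps Heps) as [d2 [Hd2 H2]].
  set (x := p + Rmin e (Rmin d1 d2) / 2).
  assert (Hm : 0 < Rmin e (Rmin d1 d2)) by (apply Rmin_pos; [|apply Rmin_pos]; assumption).
  assert (Hx : Rabs (x - p) = Rmin e (Rmin d1 d2) / 2).
  { unfold x. replace (p + Rmin e (Rmin d1 d2) / 2 - p) with (Rmin e (Rmin d1 d2) / 2) by ring.
    apply Rabs_pos_eq. lra. }
  assert (He1 := Rmin_l e (Rmin d1 d2)). assert (He2 := Rmin_r e (Rmin d1 d2)).
  assert (He3 := Rmin_l d1 d2). assert (He4 := Rmin_r d1 d2).
  specialize (H1 x ltac:(lra)). specialize (H2 x ltac:(lra)).
  rewrite Heq in H1 by lra.
  assert (Rabs (F p - H p) <= Rabs (H x - F p) + Rabs (H x - H p)).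
  { replace (F p - H p) with (-(H x - F p) + (H x - H p)) by ring.
    eapply Rle_trans; [apply Rabs_triang|]. rewrite Rabs_Ropp. lra. }
  unfold eps in *. lra.
Qed.

Fixpoint crec (d : nat -> R) (n : nat) : nat -> R :=
  match n with
  | O => fun _ => / d O
  | S m => let f := crec d m in
      fun j => if Nat.leb j m then f j
               else - / d O * sum_f_R0 (fun k => d (S k) * f (m - k)%nat) m
  end.
Definition cinv d n := crec d n n.

Lemma crec_stable d n j : (j <= n)%nat -> crec d n j = cinv d j.
Proof.
  induction n; intro Hj.
  - assert (j = O) by lia. subst. reflexivity.
  - destruct (Nat.eq_dec j (S n)) as [->|hne]; [reflexivity|].
    simpl. assert (Nat.leb j n = true) as -> by (apply Nat.leb_le; lia).
    apply IHn. lia.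
Qed.

Lemma cinv_0 d : cinv d O = / d O.
Proof. reflexivity. Qed.

Lemma crec_S d m j : crec d (S m) j = if Nat.leb j m then crec d m j
   else - / d O * sum_f_R0 (fun k => d (S k) * crec d m (m - k)%nat) m.
Proof. reflexivity. Qed.

Lemma cinv_S d m : cinv d (S m) = - / d O * sum_f_R0 (fun k => d (S k) * cinv d (m - k)%nat) m.
Proof.
  unfold cinv at 1. rewrite crec_S. assert (Nat.leb (S m) m = false) as -> by (apply Nat.leb_gt; lia).
  f_equal. apply sum_eq. intros i Hi. f_equal. apply crec_stable. lia.
Qed.

Lemma cinv_mult d : d O <> 0 -> forall n, PS_mult d (cinv d) n = e1 n.
Proof.
  intros H0 n. unfold PS_mult. destruct n.
  - simpl. rewrite cinv_0. field. exact H0.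
  - rewrite decomp_sum by lia. simpl pred.
    rewrite Nat.sub_0_r, cinv_S. simpl e1.
    replace (sum_f_R0 (fun i : nat => d (S i) * cinv d (S n - S i)%nat) n)
      with (sum_f_R0 (fun k : nat => d (S k) * cinv d (n - k)%nat) n)
      by (apply sum_eq; intros; reflexivity).
    field. exact H0.
Qed.

Definition Ssum (R0 B : R) (m : nat) := sum_f_R0 (fun k => R0 ^ (S k) * B ^ (m - k)%nat) m.

Lemma Ssum_id R0 al m : al * Ssum R0 (R0 * (1 + al)) m = (R0 * (1 + al)) ^ (S m) - R0 ^ (S m).
Proof.
  induction m.
  - unfold Ssum. simpl. ring.
  - assert (E : Ssum R0 (R0 * (1 + al)) (S m) = (R0 * (1 + al)) * Ssum R0 (R0 * (1 + al)) m + R0 ^ (S (S m))).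
    { unfold Ssum. rewrite tech5. rewrite Nat.sub_diag, pow_O, Rmult_1_r.
      rewrite scal_sum. f_equal. apply sum_eq. intros i Hi.
      replace (S m - i)%nat with (S (m - i)) by lia. cbn [pow]. ring. }
    rewrite E. replace ((R0 * (1 + al)) ^ S (S m)) with ((R0 * (1 + al)) * (R0 * (1 + al)) ^ S m) by (simpl; ring).
    replace (R0 ^ S (S m)) with (R0 * R0 ^ S m) by (simpl; ring).
    replace (al * ((R0 * (1 + al)) * Ssum R0 (R0 * (1 + al)) m + R0 * R0 ^ S m))
      with ((R0 * (1 + al)) * (al * Ssum R0 (R0 * (1 + al)) m) + al * (R0 * R0 ^ S m)) by ring.
    rewrite IHm. ring.
Qed.

Lemma cinv_bound d K R0 : d O <> 0 -> 0 <= K -> 0 < R0 ->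
  (forall n, Rabs (d n) <= K * R0 ^ n) ->
  forall n, Rabs (cinv d n) <= (R0 * (1 + K / Rabs (d O))) ^ n / Rabs (d O).
Proof.
  intros H0 HK HR Hd.
  set (s := Rabs (d O)). assert (Hs : 0 < s) by (apply Rabs_pos_lt; exact H0).
  set (al := K / s). assert (Hal : 0 <= al) by (unfold al; apply Rdiv_le_0_compat; lra).
  set (B := R0 * (1 + al)). assert (HB : 0 < B) by (unfold B; nra).
  intro n. induction n as [n IH] using (well_founded_induction Wf_nat.lt_wf).
  destruct n.
  - rewrite cinv_0. simpl. rewrite Rabs_inv. fold s. lra.
  - rewrite cinv_S. rewrite Rabs_mult, Rabs_Ropp, Rabs_inv. fold s.
    assert (Hsum : Rabs (sum_f_R0 (fun k => d (S k) * cinv d (n - k)%nat) n) <= al * Ssum R0 B n).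
    { eapply Rle_trans; [apply Rsum_abs|]. unfold Ssum. rewrite scal_sum.
      apply sum_Rle. intros k Hk. rewrite Rabs_mult.
      assert (Hk1 := Hd (S k)).
      assert (Hk2 : Rabs (cinv d (n - k)) <= B ^ (n - k) / s) by (apply IH; lia).
      assert (HBp : 0 <= B ^ (n - k)) by (apply pow_le; lra).
      assert (HRp : 0 <= R0 ^ S k) by (apply pow_le; lra).
      apply Rle_trans with ((K * R0 ^ S k) * (B ^ (n - k) / s)).
      + apply Rmult_le_compat; try apply Rabs_pos; assumption.
      + unfold al. right. field. lra. }
    assert (Hid := Ssum_id R0 al n). fold B in Hid.
    assert (HRn : 0 <= R0 ^ S n) by (apply pow_le; lra).
    apply Rle_trans with (/ s * (al * Ssum R0 B n)).
    + apply Rmult_le_compat_l; [apply Rlt_le, Rinv_0_lt_compat; exact Hs| exact Hsum].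
    + rewrite Hid. unfold Rdiv. rewrite Rmult_comm. apply Rmult_le_compat_r.
      * apply Rlt_le, Rinv_0_lt_compat; exact Hs.
      * lra.
Qed.

Lemma LA_inv G x0 r : LA G x0 r -> G x0 <> 0 ->
  exists r', 0 < r' /\ r' <= r /\ LA (fun x => / G x) x0 r' /\
    forall x, Rabs (x - x0) < r' -> G x <> 0.
Proof.
  intros HLA H0. destruct (LA_at G x0 r HLA) as [d [Hd [Hd0 HG]]].
  destruct HLA as [Hr _].
  rewrite Hd0 in H0.
  set (rho := r / 2).
  assert (Hrho : 0 < rho) by (unfold rho; lra).
  assert (Hex : ex_pseries d rho).
  { apply CV_radius_inside. eapply Rbar_lt_rad; [|exact Hd]. unfold rho; rewrite Rabs_pos_eq; lra. }
  destruct Hex as [l Hl]. apply is_pseries_R in Hl.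
  assert (Hs : ex_series (fun n => d n * rho ^ n)) by (exists l; exact Hl).
  apply ex_series_lim_0, lim0_bounded in Hs. destruct Hs as [K0 HK0].
  set (K := Rmax K0 0).
  assert (HK : 0 <= K) by apply Rmax_r.
  set (R0 := / rho). assert (HR0 : 0 < R0) by (apply Rinv_0_lt_compat; exact Hrho).
  assert (Hdb : forall n, Rabs (d n) <= K * R0 ^ n).
  { intro n. specialize (HK0 n). rewrite Rabs_mult in HK0.
    assert (Hp : 0 < rho ^ n) by (apply pow_lt; exact Hrho).
    rewrite (Rabs_pos_eq (rho ^ n)) in HK0 by lra.
    unfold R0. rewrite pow_inv.
    apply Rmult_le_reg_r with (rho ^ n); [exact Hp|].
    rewrite Rmult_assoc, Rinv_l by lra. rewrite Rmult_1_r.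
    eapply Rle_trans; [exact HK0|apply Rmax_l]. }
  set (c := cinv d).
  set (B := R0 * (1 + K / Rabs (d O))).
  assert (Hs0 : 0 < Rabs (d O)) by (apply Rabs_pos_lt; exact H0).
  assert (HB : 0 < B).
  { unfold B. apply Rmult_lt_0_compat; [exact HR0|].
    assert (0 <= K / Rabs (d O)) by (apply Rdiv_le_0_compat; lra). lra. }
  assert (Hcb := cinv_bound d K R0 H0 HK HR0 Hdb). fold B in Hcb.
  assert (Hcrad : Rbar_le (/ B) (CV_radius c)).
  { apply radius_ge; [apply Rinv_0_lt_compat; exact HB|]. intros t Ht.
    apply CV_disk_correct. unfold CV_disk.
    apply (@ex_series_le R_AbsRing R_CompleteNormedModule _ (fun n => / Rabs (d O) * (B * Rabs t) ^ n)).
    - intro n. change (Rabs (Rabs (c n * t ^ n)) <= / Rabs (d O) * (B * Rabs t) ^ n).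
      rewrite Rabs_Rabsolu, Rabs_mult, <- RPow_abs, Rpow_mult_distr.
      specialize (Hcb n). fold c in Hcb.
      assert (0 <= Rabs t ^ n) by (apply pow_le, Rabs_pos).
      apply Rle_trans with (B ^ n / Rabs (d O) * Rabs t ^ n).
      + apply Rmult_le_compat_r; assumption.
      + right. unfold Rdiv. ring.
    - apply (ex_series_scal (V := R_NormedModule)). apply ex_series_geom.
      rewrite Rabs_pos_eq by (apply Rmult_le_pos; [lra|apply Rabs_pos]).
      apply Rmult_lt_reg_l with (/ B); [apply Rinv_0_lt_compat; exact HB|].
      rewrite <- Rmult_assoc, Rinv_l by lra. lra. }
  set (r' := Rmin r (/ B)).
  assert (Hr' : 0 < r') by (apply Rmin_pos; [exact Hr|apply Rinv_0_lt_compat; exact HB]).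
  assert (Hprod : forall x, Rabs (x - x0) < r' -> G x * PSeries c (x - x0) = 1).
  { intros x Hx. assert (Hx1 : Rabs (x - x0) < r) by (eapply Rlt_le_trans; [exact Hx|apply Rmin_l]).
    assert (Hx2 : Rabs (x - x0) < / B) by (eapply Rlt_le_trans; [exact Hx|apply Rmin_r]).
    rewrite HG by exact Hx1. rewrite <- PSeries_mult.
    - rewrite (PSeries_ext _ e1). apply e1_val. apply cinv_mult. exact H0.
    - exact (Rbar_lt_rad _ _ _ Hx1 Hd).
    - exact (Rbar_lt_rad _ _ _ Hx2 Hcrad). }
  exists r'. split; [exact Hr'|]. split; [apply Rmin_l|]. split.
  - split; [exact Hr'|]. exists c. split.
    + eapply Rbar_le_trans; [|exact Hcrad]. apply Rmin_r.
    + intros x Hx. specialize (Hprod x Hx).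
      assert (G x <> 0) by (intro h; rewrite h in Hprod; lra).
      apply Rmult_eq_reg_l with (G x); [|assumption]. rewrite Hprod. field. assumption.
  - intros x Hx h. specialize (Hprod x Hx). rewrite h in Hprod. lra.
Qed.

Lemma real_analytic_LA f : real_analytic f -> forall x0, exists r, LA f x0 r.
Proof.
  intros H x0. destruct (H x0) as [r [Hr [a Ha]]]. exists r. eapply Pser_LA; eassumption.
Qed.

Lemma LA_real_analytic f : (forall x0, exists r, LA f x0 r) -> real_analytic f.
Proof.
  intros H x0. destruct (H x0) as [r Hl]. exists r. split; [destruct Hl; assumption|].
  apply LA_Pser. exact Hl.
Qed.

Lemma Can_LA f : Can f -> forall x0, exists r, LA f x0 r.
Proof. intros [H _]. apply real_analytic_LA, H. Qed.

Lemma Can_intro f : (forall x0, exists r, LA f x0 r) -> (forall x, f (x + 2 * PI) = f x) -> Can f.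
Proof. intros H1 H2. split; [apply LA_real_analytic, H1|exact H2]. Qed.

Lemma LA_min2 F G x0 : (exists r, LA F x0 r) -> (exists r, LA G x0 r) ->
  exists r, LA F x0 r /\ LA G x0 r.
Proof.
  intros [r1 H1] [r2 H2]. exists (Rmin r1 r2).
  assert (0 < Rmin r1 r2) by (apply Rmin_pos; [destruct H1|destruct H2]; assumption).
  split; eapply LA_shrink; try eassumption; [apply Rmin_l|apply Rmin_r].
Qed.

Lemma Can_plus f g : Can f -> Can g -> Can (fun x => f x + g x).
Proof.
  intros Hf Hg. apply Can_intro.
  - intro x0. destruct (LA_min2 f g x0 (Can_LA f Hf x0) (Can_LA g Hg x0)) as [r [H1 H2]].
    exists r. apply LA_plus; assumption.
  - intro x. rewrite (proj2 Hf), (proj2 Hg). reflexivity.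
Qed.

Lemma Can_mult f g : Can f -> Can g -> Can (fun x => f x * g x).
Proof.
  intros Hf Hg. apply Can_intro.
  - intro x0. destruct (LA_min2 f g x0 (Can_LA f Hf x0) (Can_LA g Hg x0)) as [r [H1 H2]].
    exists r. apply LA_mult; assumption.
  - intro x. rewrite (proj2 Hf), (proj2 Hg). reflexivity.
Qed.

Lemma Can_const c : Can (fun _ => c).
Proof.
  apply Can_intro; [|reflexivity]. intro x0. exists 1. apply LA_const. lra.
Qed.

Lemma Can_ext f g : Can f -> (forall x, f x = g x) -> Can g.
Proof.
  intros Hf H. replace g with f; [exact Hf|]. apply functional_extensionality. exact H.
Qed.

Lemma Can_pow f n : Can f -> Can (fun x => f x ^ n).
Proof.
  intro Hf. induction n.
  - simpl. apply Can_const.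
  - simpl. apply Can_mult; assumption.
Qed.

Lemma periodic_nat {A : Type} (f : R -> A) : (forall x, f (x + 2 * PI) = f x) -> forall n x, f (x + 2 * PI * INR n) = f x.
Proof.
  intros H n. induction n; intro x.
  - simpl. rewrite Rmult_0_r, Rplus_0_r. reflexivity.
  - rewrite S_INR. replace (x + 2 * PI * (INR n + 1)) with ((x + 2 * PI * INR n) + 2 * PI) by ring.
    rewrite H. apply IHn.
Qed.

Lemma periodic_Z {A : Type} (f : R -> A) : (forall x, f (x + 2 * PI) = f x) -> forall (k : Z) x, f (x + 2 * PI * IZR k) = f x.
Proof.
  intros H k x. destruct k as [|p|p].
  - simpl. rewrite Rmult_0_r, Rplus_0_r. reflexivity.
  - rewrite <- (positive_nat_Z p), <- INR_IZR_INZ. apply (periodic_nat f H).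
  - rewrite <- Pos2Z.opp_pos. rewrite opp_IZR, <- (positive_nat_Z p), <- INR_IZR_INZ.
    rewrite <- (periodic_nat f H (Pos.to_nat p) (x + 2 * PI * - INR (Pos.to_nat p))).
    f_equal. ring.
Qed.

Lemma reduce_2PI x : exists (k : Z) y, 0 <= y < 2 * PI /\ x = y + 2 * PI * IZR k.
Proof.
  assert (HP := PI_RGT_0).
  exists (Zfloor (x / (2 * PI))). exists (x - 2 * PI * IZR (Zfloor (x / (2 * PI)))).
  destruct (Zfloor_bound (x / (2 * PI))) as [H1 H2].
  split; [|ring]. split.
  - assert (IZR (Zfloor (x / (2 * PI))) * (2 * PI) <= x).
    { apply Rmult_le_reg_r with (/ (2 * PI)); [apply Rinv_0_lt_compat; lra|].
      rewrite Rmult_assoc, Rinv_r by lra. rewrite Rmult_1_r. exact H1. }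
    lra.
  - assert (x < (IZR (Zfloor (x / (2 * PI))) + 1) * (2 * PI)).
    { apply Rmult_lt_reg_r with (/ (2 * PI)); [apply Rinv_0_lt_compat; lra|].
      rewrite Rmult_assoc, Rinv_r by lra. rewrite Rmult_1_r. exact H2. }
    lra.
Qed.

Definition ev (a : nat -> R) (n : nat) : R := if Nat.even n then a (Nat.div2 n) else 0.
Definition od (a : nat -> R) (n : nat) : R := if Nat.even n then 0 else a (Nat.div2 n).

Lemma even_2n n : Nat.even (2 * n) = true.
Proof. rewrite Nat.even_mul. reflexivity. Qed.
Lemma even_2n1 n : Nat.even (2 * n + 1) = false.
Proof. rewrite Nat.add_1_r, Nat.even_succ, Nat.odd_mul. reflexivity. Qed.
Lemma div2_2n1 n : Nat.div2 (2 * n + 1) = n.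
Proof. rewrite Nat.add_1_r. apply Nat.div2_succ_double. Qed.

Lemma is_pseries_zero x : is_pseries (fun _ : nat => 0) x 0.
Proof.
  apply is_pseries_Reals. intros eps Heps. exists O. intros n _.
  replace (sum_f_R0 (fun n0 : nat => 0 * x ^ n0) n) with 0.
  - unfold R_dist. rewrite Rminus_0_r, Rabs_R0. exact Heps.
  - induction n; simpl; [ring|rewrite <- IHn; ring].
Qed.

Lemma cos_pser t : is_pseries (ev cos_n) t (cos t).
Proof.
  replace (cos t) with (cos t + t * 0) by ring.
  apply is_pseries_odd_even.
  - eapply is_pseries_ext. { intro n. unfold ev. rewrite even_2n, Nat.div2_double. reflexivity. }
    apply is_pseries_Reals. unfold cos. destruct (exist_cos (Rsqr t)) as [a Ha].
    replace (t ^ 2) with (Rsqr t) by (unfold Rsqr; ring). exact Ha.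
  - eapply is_pseries_ext. { intro n. unfold ev. rewrite even_2n1. reflexivity. }
    apply is_pseries_zero.
Qed.

Lemma sin_pser t : is_pseries (od sin_n) t (sin t).
Proof.
  unfold sin. destruct (exist_sin (Rsqr t)) as [a Ha].
  replace (t * a) with (0 + t * a) by ring.
  apply is_pseries_odd_even.
  - eapply is_pseries_ext. { intro n. unfold od. rewrite even_2n. reflexivity. }
    apply is_pseries_zero.
  - eapply is_pseries_ext. { intro n. unfold od. rewrite even_2n1, div2_2n1. reflexivity. }
    apply is_pseries_Reals.
    replace (t ^ 2) with (Rsqr t) by (unfold Rsqr; ring). exact Ha.
Qed.

Lemma LA_entire (a : nat -> R) (F : R -> R) x0 r : 0 < r -> (forall t, is_pseries a t (F t)) ->
  LA (fun x => F (x - x0)) x0 r.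
Proof.
  intros Hr H. split; [exact Hr|]. exists a. split.
  - apply radius_ge; [exact Hr|]. intros t _. exists (F t). apply H.
  - intros x _. symmetry. apply is_pseries_unique, H.
Qed.

Lemma Can_cos p : Can (fun x => cos (x - p)).
Proof.
  apply Can_intro.
  - intro x0. exists 1.
    eapply LA_ext.
    + apply LA_plus.
      * apply LA_mult; [apply (LA_entire (ev cos_n) cos); [lra|apply cos_pser]|apply (LA_const (cos (x0 - p))); lra].
      * apply LA_mult; [apply (LA_entire (od sin_n) sin); [lra|apply sin_pser]|apply (LA_const (- sin (x0 - p))); lra].
    + intros x _. simpl. replace (x - p) with ((x - x0) + (x0 - p)) by ring.
      rewrite cos_plus. ring.
  - intro x. replace (x + 2 * PI - p) with ((x - p) + 2 * PI) by ring.
    rewrite cos_plus, cos_2PI, sin_2PI. ring.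
Qed.

Lemma Can_sin p : Can (fun x => sin (x - p)).
Proof.
  apply Can_intro.
  - intro x0. exists 1.
    eapply LA_ext.
    + apply LA_plus.
      * apply LA_mult; [apply (LA_entire (od sin_n) sin); [lra|apply sin_pser]|apply (LA_const (cos (x0 - p))); lra].
      * apply LA_mult; [apply (LA_entire (ev cos_n) cos); [lra|apply cos_pser]|apply (LA_const (sin (x0 - p))); lra].
    + intros x _. simpl. replace (x - p) with ((x - x0) + (x0 - p)) by ring.
      rewrite sin_plus. ring.
  - intro x. replace (x + 2 * PI - p) with ((x - p) + 2 * PI) by ring.
    rewrite sin_plus, cos_2PI, sin_2PI. ring.
Qed.

Lemma identity_up f x0 delta : Can f -> 0 < delta -> (forall x, Rabs (x - x0) < delta -> f x = 0) ->
  forall y, x0 <= y -> f y = 0.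
Proof.
  intros Hf Hd Hz y Hy. apply NNPP. intro Hfy.
  set (A := fun t => x0 <= t /\ forall z, x0 <= z <= t -> f z = 0).
  assert (HbA : forall t, A t -> t < y).
  { intros t [Ht1 Ht2]. destruct (Rlt_le_dec t y) as [h|h]; [exact h|].
    exfalso. apply Hfy, Ht2. lra. }
  assert (Hx0 : A (x0 + delta / 2)).
  { split; [lra|]. intros z Hz'. apply Hz. rewrite Rabs_pos_eq; lra. }
  destruct (completeness A) as [s [Hub Hlub]].
  { exists y. intros t Ht. left. apply HbA, Ht. }
  { exists (x0 + delta / 2). exact Hx0. }
  assert (Hs1 : x0 + delta / 2 <= s) by (apply Hub, Hx0).
  assert (Hs2 : s <= y) by (apply Hlub; intros t Ht; left; apply HbA, Ht).
  assert (HC : forall z, x0 <= z < s -> f z = 0).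
  { intros z Hz'. apply NNPP. intro hf.
    assert (Hzub : is_upper_bound A z).
    { intros t [Ht1 Ht2]. destruct (Rle_dec t z) as [h|h]; [exact h|].
      exfalso. apply hf, Ht2. lra. }
    specialize (Hlub z Hzub). lra. }
  destruct (Can_LA f Hf s) as [r Hr].
  assert (Hrp : 0 < r) by (destruct Hr; assumption).
  destruct (LA_dich f s r Hr) as [Hall|[m [G [HG [HG0 HfG]]]]].
  - assert (HA : A (s + r / 2)).
    { split; [lra|]. intros z Hz'. destruct (Rlt_le_dec z s) as [h|h].
      + apply HC. lra.
      + apply Hall. rewrite Rabs_pos_eq; lra. }
    specialize (Hub _ HA). lra.
  - destruct (LA_nonzero_near G s r HG HG0) as [d' [Hd' HGn]].
    set (e := Rmin d' (Rmin r (s - x0))).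
    assert (He : 0 < e) by (unfold e; apply Rmin_pos; [|apply Rmin_pos]; lra).
    assert (He1 := Rmin_l d' (Rmin r (s - x0))). assert (He2 := Rmin_r d' (Rmin r (s - x0))).
    assert (He3 := Rmin_l r (s - x0)). assert (He4 := Rmin_r r (s - x0)). fold e in He1, He2.
    set (z := s - e / 2).
    assert (Hzs : Rabs (z - s) = e / 2) by (unfold z; replace (s - e/2 - s) with (- (e/2)) by ring; rewrite Rabs_Ropp, Rabs_pos_eq; lra).
    assert (Hfz : f z = 0) by (apply HC; unfold z; lra).
    rewrite HfG in Hfz by lra.
    apply Rmult_integral in Hfz. destruct Hfz as [h|h].
    + apply pow_nonzero with (n := m) in h; [exact h|]. unfold z. lra.
    + apply (HGn z); [lra|exact h].
Qed.

Lemma identity f x0 delta : Can f -> 0 < delta -> (forall x, Rabs (x - x0) < delta -> f x = 0) ->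
  forall x, f x = 0.
Proof.
  intros Hf Hd Hz x.
  destruct (reduce_2PI (x - x0)) as [k [y [Hy Hxy]]].
  replace x with ((x0 + y) + 2 * PI * IZR k) by lra.
  rewrite (periodic_Z f (proj2 Hf)). apply (identity_up f x0 delta Hf Hd Hz). lra.
Qed.

Lemma nonzero_order f p : Can f -> nonzero_fun f ->
  exists r m G, LA G p r /\ G p <> 0 /\ forall x, Rabs (x - p) < r -> f x = (x - p) ^ m * G x.
Proof.
  intros Hf [x1 Hx1]. destruct (Can_LA f Hf p) as [r Hr].
  destruct (LA_dich f p r Hr) as [Hall|[m [G H]]].
  - exfalso. apply Hx1. apply (identity f p r Hf); [destruct Hr; assumption|exact Hall].
  - exists r, m, G. exact H.
Qed.

Definition vt (f : R -> R) (p : R) (a : nat) : Prop :=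
  exists r G, LA G p r /\ forall x, Rabs (x - p) < r -> f x = (x - p) ^ a * G x.
Definition eo (f : R -> R) (p : R) (a : nat) : Prop :=
  exists r G, LA G p r /\ G p <> 0 /\ forall x, Rabs (x - p) < r -> f x = (x - p) ^ a * G x.

Lemma vt_Can0 f p : Can f -> vt f p 0.
Proof.
  intro Hf. destruct (Can_LA f Hf p) as [r Hr]. exists r, f. split; [exact Hr|].
  intros. simpl. ring.
Qed.

Lemma vt_zero p a : vt (fun _ => 0) p a.
Proof. exists 1, (fun _ => 0). split; [apply LA_const; lra|]. intros. ring. Qed.

Lemma vt_min f g p a b : vt f p a -> vt g p b -> exists r F G, LA F p r /\ LA G p r /\
  (forall x, Rabs (x - p) < r -> f x = (x - p) ^ a * F x) /\
  (forall x, Rabs (x - p) < r -> g x = (x - p) ^ b * G x).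
Proof.
  intros [r1 [F [HF Hf]]] [r2 [G [HG Hg]]].
  assert (0 < r1) by (destruct HF; assumption). assert (0 < r2) by (destruct HG; assumption).
  assert (H1 := Rmin_l r1 r2). assert (H2 := Rmin_r r1 r2).
  assert (0 < Rmin r1 r2) by (apply Rmin_pos; assumption).
  exists (Rmin r1 r2), F, G. split; [|split; [|split]].
  - eapply LA_shrink; eassumption.
  - eapply LA_shrink; eassumption.
  - intros x Hx. apply Hf. lra.
  - intros x Hx. apply Hg. lra.
Qed.

Lemma vt_plus f g p a : vt f p a -> vt g p a -> vt (fun x => f x + g x) p a.
Proof.
  intros H1 H2. destruct (vt_min f g p a a H1 H2) as [r [F [G [HF [HG [Hf Hg]]]]]].
  exists r, (fun x => F x + G x). split; [apply LA_plus; assumption|].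
  intros x Hx. rewrite Hf, Hg by exact Hx. ring.
Qed.

Lemma vt_mult f g p a b : vt f p a -> vt g p b -> vt (fun x => f x * g x) p (a + b).
Proof.
  intros H1 H2. destruct (vt_min f g p a b H1 H2) as [r [F [G [HF [HG [Hf Hg]]]]]].
  exists r, (fun x => F x * G x). split; [apply LA_mult; assumption|].
  intros x Hx. rewrite Hf, Hg by exact Hx. rewrite pow_add. ring.
Qed.

Lemma vt_Canmul h f p a : Can h -> vt f p a -> vt (fun x => h x * f x) p a.
Proof.
  intros Hh Hf. replace a with (0 + a)%nat by reflexivity.
  apply vt_mult; [apply vt_Can0, Hh|exact Hf].
Qed.

Lemma vt_le f p a b : vt f p a -> (b <= a)%nat -> vt f p b.
Proof.
  intros [r [G [HG Hf]]] Hba. exists r, (fun x => (x - p) ^ (a - b) * G x). split.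
  - apply LA_mult; [apply LA_pow, LA_idc; destruct HG; assumption|exact HG].
  - intros x Hx. rewrite Hf by exact Hx. rewrite <- Rmult_assoc, <- pow_add.
    replace (b + (a - b))%nat with a by lia. reflexivity.
Qed.

Lemma eo_vt f p a : eo f p a -> vt f p a.
Proof. intros [r [G [HG [_ Hf]]]]. exists r, G. split; assumption. Qed.

Lemma eo_vt_le f p m a : eo f p m -> vt f p a -> (a <= m)%nat.
Proof.
  intros He Hv. destruct (Nat.le_gt_cases a m) as [h|h]; [exact h|exfalso].
  destruct He as [r1 [G [HG [HG0 Hf1]]]]. destruct Hv as [r2 [H [HH Hf2]]].
  apply HG0.
  assert (Hr1 : 0 < r1) by (destruct HG; assumption). assert (Hr2 : 0 < r2) by (destruct HH; assumption).
  transitivity ((p - p) ^ (a - m) * H p).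
  - apply (LA_punct_eq G (fun x => (x - p) ^ (a - m) * H x) p r1 r2 HG).
    + apply LA_mult; [apply LA_pow, LA_idc; exact Hr2|exact HH].
    + exists (Rmin r1 r2). split; [apply Rmin_pos; assumption|].
      intros x [Hx1 Hx2]. assert (H1 := Rmin_l r1 r2). assert (H2 := Rmin_r r1 r2).
      assert (Hne : (x - p) ^ m <> 0) by (apply pow_nonzero; intro e; rewrite e, Rabs_R0 in Hx1; lra).
      apply Rmult_eq_reg_l with ((x - p) ^ m); [|exact Hne].
      rewrite <- Hf1 by lra. rewrite Hf2 by lra.
      replace a with (m + (a - m))%nat at 1 by lia. rewrite pow_add. ring.
  - replace (p - p) with 0 by ring. rewrite pow_i by lia. ring.
Qed.

Lemma vt1_zero f p : vt f p 1 -> f p = 0.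
Proof.
  intros [r [G [HG Hf]]]. rewrite Hf.
  - replace (p - p) with 0 by ring. ring.
  - replace (p - p) with 0 by ring. rewrite Rabs_R0. destruct HG; assumption.
Qed.

Lemma zero_vt1 f p : Can f -> f p = 0 -> vt f p 1.
Proof.
  intros Hf H0. destruct (Can_LA f Hf p) as [r Hr].
  destruct (LA_at f p r Hr) as [d [Hd [Hd0 HF]]].
  destruct (LA_factor_d f p r d 1 ltac:(destruct Hr; assumption) Hd HF) as [G [HG [_ HfG]]].
  { intros k Hk. assert (k = O) by lia. subst. rewrite <- Hd0. exact H0. }
  exists r, G. split; assumption.
Qed.

Lemma Pser_LA_d F x0 r a : 0 < r -> (forall x, Rabs (x - x0) < r -> Pser a (x - x0) (F x)) ->
  Rbar_le r (CV_radius a) /\ forall x, Rabs (x - x0) < r -> F x = PSeries a (x - x0).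
Proof.
  intros Hr H. split.
  - apply radius_ge; [exact Hr|]. intros t Ht. exists (F (x0 + t)).
    apply is_pseries_Reals. replace t with (x0 + t - x0) at 1 by ring. apply H.
    replace (x0 + t - x0) with t by ring. exact Ht.
  - intros x Hx. symmetry. apply is_pseries_unique. apply is_pseries_Reals. apply H, Hx.
Qed.

Lemma vanish_order_eo f p n : vanish_order f p n -> eo f p n.
Proof.
  intros [r [Hr [a [Ha [Hz Hn]]]]].
  destruct (Pser_LA_d f p r a Hr Ha) as [Hd HF].
  destruct (LA_factor_d f p r a n Hr Hd HF Hz) as [G [HG [HG0 HfG]]].
  exists r, G. split; [exact HG|]. split; [rewrite HG0; exact Hn|exact HfG].
Qed.

Lemma eo_vanish_order f p n : eo f p n -> vanish_order f p n.
Proof.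
  intros [r [G [HG [HG0 Hf]]]].
  destruct (LA_at G p r HG) as [d [Hd [Hd0 HGd]]].
  assert (Hr : 0 < r) by (destruct HG; assumption).
  exists r. split; [exact Hr|]. exists (PS_incr_n d n). split; [|split].
  - intros x Hx. apply is_pseries_Reals.
    replace (f x) with (PSeries (PS_incr_n d n) (x - p)).
    + apply PSeries_correct. apply ex_pseries_incr_n. apply CV_radius_inside.
      exact (Rbar_lt_rad _ _ _ Hx Hd).
    + rewrite PSeries_incr_n, Hf by exact Hx. rewrite HGd by exact Hx. reflexivity.
  - intros k Hk. rewrite PS_incr_n_simplify.
    destruct (Compare_dec.le_lt_dec n k) as [h|h]; [lia|reflexivity].
  - rewrite PS_incr_n_simplify. destruct (Compare_dec.le_lt_dec n n) as [h|h]; [|lia].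
    rewrite Nat.sub_diag. rewrite <- Hd0. exact HG0.
Qed.

Fixpoint sumsq (l : list (R -> R)) (x : R) : R :=
  match l with nil => 0 | f :: l' => f x * f x + sumsq l' x end.

Definition sqo (h : R -> R) p a (strict : Prop) := exists r G, LA G p r /\
  (forall x, Rabs (x - p) < r -> 0 <= G x) /\ (strict -> 0 < G p) /\
  forall x, Rabs (x - p) < r -> h x = (x - p) ^ (a + a) * G x.

Lemma sumsq_sqo l p a : (forall f, In f l -> vt f p a) ->
  sqo (sumsq l) p a (exists f, In f l /\ eo f p a).
Proof.
  induction l as [|f l IH]; intro Hl.
  - exists 1, (fun _ => 0). split; [apply LA_const; lra|]. split; [intros; lra|]. split.
    + intros [f [[] _]].
    + intros. simpl. ring.
  - destruct IH as [r2 [G2 [HG2 [Hnn [Hst Heq]]]]]. { intros g Hg. apply Hl. right. exact Hg. }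
    assert (Hf : vt f p a) by (apply Hl; left; reflexivity).
    destruct (classic (eo f p a)) as [Heo|Hneo].
    + destruct Heo as [r1 [F [HF [HF0 Hf1]]]].
      assert (0 < r1) by (destruct HF; assumption). assert (0 < r2) by (destruct HG2; assumption).
      assert (H1 := Rmin_l r1 r2). assert (H2 := Rmin_r r1 r2).
      assert (0 < Rmin r1 r2) by (apply Rmin_pos; assumption).
      exists (Rmin r1 r2), (fun x => F x * F x + G2 x). split; [|split; [|split]].
      * apply LA_plus; [apply LA_mult|]; eapply LA_shrink; eassumption.
      * intros x Hx. assert (0 <= G2 x) by (apply Hnn; lra). nra.
      * intros _. assert (0 <= G2 p) by (apply Hnn; replace (p - p) with 0 by ring; rewrite Rabs_R0; lra).
        assert (0 < F p * F p) by (apply Rsqr_pos_lt in HF0; unfold Rsqr in HF0; exact HF0). lra.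
      * intros x Hx. simpl. rewrite Hf1 by lra. rewrite Heq by lra. rewrite pow_add. ring.
    + destruct Hf as [r1 [F [HF Hf1]]].
      assert (0 < r1) by (destruct HF; assumption). assert (0 < r2) by (destruct HG2; assumption).
      assert (H1 := Rmin_l r1 r2). assert (H2 := Rmin_r r1 r2).
      assert (0 < Rmin r1 r2) by (apply Rmin_pos; assumption).
      exists (Rmin r1 r2), (fun x => F x * F x + G2 x). split; [|split; [|split]].
      * apply LA_plus; [apply LA_mult|]; eapply LA_shrink; eassumption.
      * intros x Hx. assert (0 <= G2 x) by (apply Hnn; lra). nra.
      * intros [g [[<-|Hg] Hge]]; [contradiction|].
        assert (0 < G2 p) by (apply Hst; exists g; split; assumption).
        assert (0 <= F p * F p) by nra. lra.
      * intros x Hx. simpl. rewrite Hf1 by lra. rewrite Heq by lra. rewrite pow_add. ring.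
Qed.

Lemma sqo_eo h p a : sqo h p a True -> eo h p (a + a).
Proof.
  intros [r [G [HG [_ [Hst Heq]]]]]. exists r, G. split; [exact HG|]. split.
  - specialize (Hst I). lra.
  - exact Heq.
Qed.

Lemma zero_product D q : Can D -> Can q -> nonzero_fun q -> (forall x, D x * q x = 0) -> forall x, D x = 0.
Proof.
  intros HD Hq Hqn H x. apply NNPP. intro hx.
  assert (HDn : nonzero_fun D) by (exists x; exact hx).
  destruct (nonzero_order D 0 HD HDn) as [r1 [m1 [G1 [HG1 [HG10 Hf1]]]]].
  destruct (nonzero_order q 0 Hq Hqn) as [r2 [m2 [G2 [HG2 [HG20 Hf2]]]]].
  destruct (LA_nonzero_near _ _ _ HG1 HG10) as [d1 [Hd1 Hn1]].
  destruct (LA_nonzero_near _ _ _ HG2 HG20) as [d2 [Hd2 Hn2]].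
  assert (0 < r1) by (destruct HG1; assumption). assert (0 < r2) by (destruct HG2; assumption).
  set (e := Rmin (Rmin r1 r2) (Rmin d1 d2)).
  assert (He : 0 < e) by (unfold e; repeat apply Rmin_pos; assumption).
  assert (E1 := Rmin_l (Rmin r1 r2) (Rmin d1 d2)). assert (E2 := Rmin_r (Rmin r1 r2) (Rmin d1 d2)).
  assert (E3 := Rmin_l r1 r2). assert (E4 := Rmin_r r1 r2).
  assert (E5 := Rmin_l d1 d2). assert (E6 := Rmin_r d1 d2). fold e in E1, E2.
  set (z := e / 2).
  assert (Hz : Rabs (z - 0) = e / 2) by (unfold z; rewrite Rminus_0_r, Rabs_pos_eq; lra).
  specialize (H z). rewrite Hf1, Hf2 in H by lra.
  assert ((z - 0) ^ m1 <> 0) by (apply pow_nonzero; unfold z; lra).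
  assert ((z - 0) ^ m2 <> 0) by (apply pow_nonzero; unfold z; lra).
  assert (G1 z <> 0) by (apply Hn1; lra). assert (G2 z <> 0) by (apply Hn2; lra).
  apply (Rmult_integral_contrapositive_currified ((z - 0) ^ m1 * G1 z) ((z - 0) ^ m2 * G2 z));
    try (apply Rmult_integral_contrapositive_currified; assumption).
  exact H.
Qed.

Definition Pd (u q : R -> R) (x y : R) : Prop := exists r W, LA W x r /\ W x = y /\
  forall z, 0 < Rabs (z - x) < r -> q z <> 0 /\ W z = u z / q z.

Definition wdiv (u q : R -> R) (x : R) : R :=
  if Req_EM_T (q x) 0 then epsilon (inhabits 0) (Pd u q x) else u x / q x.

Lemma Pd_exists u q x0 m : eo q x0 m -> vt u x0 m -> exists y, Pd u q x0 y.
Proof.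
  intros [r1 [Q [HQ [HQ0 Hq]]]] [r2 [U [HU Hu]]].
  destruct (LA_inv Q x0 r1 HQ HQ0) as [r3 [Hr3 [Hr31 [HiQ HQn]]]].
  assert (0 < r2) by (destruct HU; assumption).
  assert (E1 := Rmin_l r2 r3). assert (E2 := Rmin_r r2 r3).
  assert (0 < Rmin r2 r3) by (apply Rmin_pos; assumption).
  exists (U x0 * / Q x0), (Rmin r2 r3), (fun x => U x * / Q x). split; [|split].
  - apply LA_mult; eapply LA_shrink; eassumption.
  - reflexivity.
  - intros z [Hz1 Hz2].
    assert (Hp : (z - x0) ^ m <> 0) by (apply pow_nonzero; intro e; rewrite e, Rabs_R0 in Hz1; lra).
    assert (HQz : Q z <> 0) by (apply HQn; lra).
    rewrite Hq, Hu by lra. split.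
    + apply Rmult_integral_contrapositive_currified; assumption.
    + field. split; assumption.
Qed.

Lemma Pd_periodic u q x : (forall z, u (z + 2 * PI) = u z) -> (forall z, q (z + 2 * PI) = q z) ->
  Pd u q (x + 2 * PI) = Pd u q x.
Proof.
  intros Hu Hq. apply functional_extensionality. intro y. apply propositional_extensionality. split.
  - intros [r [W [HW [HWx HWz]]]]. exists r, (fun z => W (z - - (2 * PI))). split; [|split].
    + pose proof (LA_shift W (x + 2 * PI) r (- (2 * PI)) HW) as H.
      replace (x + 2 * PI + - (2 * PI)) with x in H by ring. exact H.
    + rewrite <- HWx. f_equal. ring.
    + intros z Hz. replace (z - - (2 * PI)) with (z + 2 * PI) by ring.
      destruct (HWz (z + 2 * PI)) as [A B].
      { replace (z + 2 * PI - (x + 2 * PI)) with (z - x) by ring. exact Hz. }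
      rewrite Hq in A. rewrite Hu, Hq in B. split; assumption.
  - intros [r [W [HW [HWx HWz]]]]. exists r, (fun z => W (z - 2 * PI)). split; [|split].
    + apply LA_shift. exact HW.
    + rewrite <- HWx. f_equal. ring.
    + intros z Hz.
      assert (Hz' : 0 < Rabs (z - 2 * PI - x) < r) by (replace (z - 2 * PI - x) with (z - (x + 2 * PI)) by ring; exact Hz).
      destruct (HWz _ Hz') as [A B].
      assert (Eu : u (z - 2 * PI) = u z) by (rewrite <- (Hu (z - 2 * PI)); f_equal; ring).
      assert (Eq : q (z - 2 * PI) = q z) by (rewrite <- (Hq (z - 2 * PI)); f_equal; ring).
      rewrite Eq in A. rewrite Eu, Eq in B. split; assumption.
Qed.

Lemma div_Can u q : Can u -> Can q ->
  (forall p, q p = 0 -> exists m, eo q p m /\ vt u p m) ->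
  exists w, Can w /\ forall x, u x = w x * q x.
Proof.
  intros Hu Hq Hz. exists (wdiv u q). split.
  - apply Can_intro.
    + intro x0. destruct (Req_EM_T (q x0) 0) as [h0|h0].
      * destruct (Hz x0 h0) as [m [Hm1 Hm2]].
        assert (Hex : exists y, Pd u q x0 y) by (eapply Pd_exists; eassumption).
        assert (Hsp := epsilon_spec (inhabits 0) (Pd u q x0) Hex).
        destruct Hsp as [r [W [HW [HWx HWz]]]]. exists r.
        apply (LA_ext W); [exact HW|]. intros z Hz'.
        destruct (Req_dec z x0) as [->|hne].
        -- unfold wdiv. destruct (Req_EM_T (q x0) 0); [|contradiction]. exact HWx.
        -- assert (Hzz : 0 < Rabs (z - x0) < r) by (split; [apply Rabs_pos_lt; lra|exact Hz']).
           destruct (HWz z Hzz) as [A B]. unfold wdiv. destruct (Req_EM_T (q z) 0); [contradiction|].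
           exact B.
      * destruct (Can_LA q Hq x0) as [r1 Hr1].
        destruct (LA_inv q x0 r1 Hr1 h0) as [r3 [Hr3 [_ [HiQ HQn]]]].
        destruct (LA_min2 u (fun x => / q x) x0 (Can_LA u Hu x0) (ex_intro _ r3 HiQ)) as [r [H1 H2]].
        exists (Rmin r r3).
        assert (0 < r) by (destruct H1; assumption).
        assert (E1 := Rmin_l r r3). assert (E2 := Rmin_r r r3).
        assert (0 < Rmin r r3) by (apply Rmin_pos; assumption).
        apply (LA_ext (fun x => u x * / q x)).
        -- eapply LA_shrink; [apply LA_mult; [exact H1|exact H2]|assumption|assumption].
        -- intros z Hz'. unfold wdiv. destruct (Req_EM_T (q z) 0) as [e|_].
           ++ exfalso. apply (HQn z); [lra|exact e].
           ++ reflexivity.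
    + intro x. unfold wdiv. rewrite (proj2 Hq), (proj2 Hu), Pd_periodic by (apply Hu || apply Hq).
      reflexivity.
  - intro x. unfold wdiv. destruct (Req_EM_T (q x) 0) as [h|h].
    + destruct (Hz x h) as [m [Hm1 Hm2]]. rewrite h, Rmult_0_r.
      destruct m.
      * exfalso. destruct Hm1 as [r [G [HG [HG0 Hq']]]]. apply HG0.
        rewrite <- h. rewrite Hq'; [simpl; ring|]. replace (x - x) with 0 by ring.
        rewrite Rabs_R0. destruct HG; assumption.
      * apply vt1_zero. apply (vt_le u x (S m)); [exact Hm2|lia].
    + field. exact h.
Qed.

Lemma quot_vt c u q p m a : Can c -> (forall x, u x = c x * q x) -> eo q p m -> vt u p (m + a) -> vt c p a.
Proof.
  intros Hc Hcu [r1 [Q [HQ [HQ0 Hq]]]] [r2 [U [HU Hu]]].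
  destruct (LA_inv Q p r1 HQ HQ0) as [r3 [Hr3 [Hr31 [HiQ HQn]]]].
  assert (0 < r2) by (destruct HU; assumption).
  assert (E1 := Rmin_l r2 r3). assert (E2 := Rmin_r r2 r3).
  set (rho := Rmin r2 r3).
  assert (Hrho : 0 < rho) by (apply Rmin_pos; assumption).
  assert (HW : LA (fun x => U x * / Q x) p rho) by (apply LA_mult; eapply LA_shrink; eassumption).
  assert (Hpunct : forall x, 0 < Rabs (x - p) < rho -> c x = (x - p) ^ a * (U x * / Q x)).
  { intros x [Hx1 Hx2].
    assert (Hp : (x - p) ^ m <> 0) by (apply pow_nonzero; intro e; rewrite e, Rabs_R0 in Hx1; lra).
    assert (HQx : Q x <> 0) by (apply HQn; unfold rho in Hx2; lra).
    specialize (Hcu x). rewrite Hq, Hu in Hcu by (unfold rho in Hx2; lra).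
    rewrite pow_add in Hcu.
    apply Rmult_eq_reg_l with ((x - p) ^ m * Q x); [|apply Rmult_integral_contrapositive_currified; assumption].
    transitivity ((x - p) ^ m * (x - p) ^ a * U x); [rewrite Hcu; ring|]. field. exact HQx. }
  exists rho, (fun x => U x * / Q x). split; [exact HW|].
  intros x Hx. destruct (Req_dec x p) as [->|hne].
  - destruct (Can_LA c Hc p) as [r4 Hr4].
    apply (LA_punct_eq c (fun x => (x - p) ^ a * (U x * / Q x)) p r4 rho Hr4).
    + apply LA_mult; [apply LA_pow, LA_idc; exact Hrho|exact HW].
    + exists rho. split; [exact Hrho|]. exact Hpunct.
  - apply Hpunct. split; [apply Rabs_pos_lt; lra|exact Hx].
Qed.

Definition dec (P : Prop) : bool := if excluded_middle_informative P then true else false.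
Lemma dec_true P : dec P = true <-> P.
Proof. unfold dec. destruct (excluded_middle_informative P); split; intro; try tauto; discriminate. Qed.

Lemma isolated_zeros f y : Can f -> nonzero_fun f ->
  exists delta, 0 < delta /\ forall z, 0 < Rabs (z - y) < delta -> f z <> 0.
Proof.
  intros Hf Hn. destruct (nonzero_order f y Hf Hn) as [r [m [G [HG [HG0 HfG]]]]].
  destruct (LA_nonzero_near G y r HG HG0) as [d [Hd Hn']].
  assert (0 < r) by (destruct HG; assumption).
  exists (Rmin r d). split; [apply Rmin_pos; assumption|].
  intros z [Hz1 Hz2]. assert (E1 := Rmin_l r d). assert (E2 := Rmin_r r d).
  rewrite HfG by lra. apply Rmult_integral_contrapositive_currified.
  - apply pow_nonzero. intro e. rewrite e, Rabs_R0 in Hz1. lra.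
  - apply Hn'. lra.
Qed.

Definition famU (f0 : R -> R) (x y : R) : Prop := 0 <= x <= 2 * PI /\
  exists delta, 0 < delta /\ Rabs (y - x) < delta /\ forall z, 0 < Rabs (z - x) < delta -> f0 z <> 0.

Lemma famU_cond f0 : forall x, (exists y, famU f0 x y) -> 0 <= x <= 2 * PI.
Proof. intros x [y [H _]]. exact H. Qed.

Definition fam (f0 : R -> R) : family := mkfamily (fun x => 0 <= x <= 2 * PI) (famU f0) (famU_cond f0).

Lemma common_zeros (I : (R -> R) -> Prop) : is_ideal I -> (exists f0, I f0 /\ nonzero_fun f0) ->
  exists (P : list R) (Fs : list (R -> R)),
   NoDup P /\ (forall p, In p P -> S1pt p) /\
   (forall x, S1pt x -> ((forall f, I f -> f x = 0) <-> In x P)) /\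
   (forall f, In f Fs -> I f) /\ (exists f, In f Fs /\ nonzero_fun f) /\
   (forall x, (forall f, In f Fs -> f x = 0) -> forall g, I g -> g x = 0).
Proof.
  intros HI [f0 [Hf0 Hf0n]].
  destruct HI as [HIC [HI0 [HIp HIm]]].
  assert (Hf0C : Can f0) by (apply HIC, Hf0).
  assert (HP := PI_RGT_0).
  destruct (compact_P3 0 (2 * PI) (fam f0)) as [D [Hcov [l Hl]]].
  { split.
    - intros y Hy. exists y. split; [exact Hy|].
      destruct (isolated_zeros f0 y Hf0C Hf0n) as [d [Hd Hz]].
      exists d. split; [exact Hd|]. split; [replace (y - y) with 0 by ring; rewrite Rabs_R0; exact Hd|exact Hz].
    - intros x y [Hx [d [Hd [Hyd Hz]]]].
      assert (Hp : 0 < d - Rabs (y - x)) by lra.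
      exists (mkposreal _ Hp). intros w Hw. unfold disc in Hw. simpl in Hw.
      split; [exact Hx|]. exists d. split; [exact Hd|]. split; [|exact Hz].
      replace (w - x) with ((w - y) + (y - x)) by ring.
      eapply Rle_lt_trans; [apply Rabs_triang|]. lra. }
  assert (Hzl : forall y, 0 <= y <= 2 * PI -> f0 y = 0 -> In y l).
  { intros y Hy Hy0. destruct (Hcov y Hy) as [x [[Hx [d [Hd [Hyd Hz]]]] HDx]].
    destruct (Req_dec y x) as [->|hne].
    - apply Hl. split; assumption.
    - exfalso. apply (Hz y); [|exact Hy0]. split; [apply Rabs_pos_lt; lra|exact Hyd]. }
  set (ch := fun x => epsilon (inhabits f0) (fun f => I f /\ (f x <> 0 \/ forall g, I g -> g x = 0))).
  assert (Hch : forall x, I (ch x) /\ (ch x x <> 0 \/ forall g, I g -> g x = 0)).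
  { intro x. apply (epsilon_spec (inhabits f0) (fun f => I f /\ (f x <> 0 \/ forall g, I g -> g x = 0))).
    destruct (classic (forall g, I g -> g x = 0)) as [h|h].
    - exists f0. split; [exact Hf0|right; exact h].
    - apply not_all_ex_not in h. destruct h as [g hg].
      exists g. apply imply_to_and in hg. destruct hg as [hg1 hg2]. split; [exact hg1|left; exact hg2]. }
  exists (nodup Req_EM_T (filter (fun x => dec (S1pt x /\ forall f, I f -> f x = 0)) l)).
  exists (f0 :: map ch l).
  split; [apply NoDup_nodup|]. split; [|split; [|split; [|split]]].
  - intros p Hp'. apply nodup_In, filter_In in Hp'. destruct Hp' as [_ Hp'].
    cbv beta in Hp'. apply (proj1 (dec_true _)) in Hp'. apply Hp'.
  - intros x Hx. split.
    + intro Hz. apply nodup_In, filter_In. split.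
      * apply Hzl; [unfold S1pt in Hx; lra|]. apply Hz, Hf0.
      * apply (proj2 (dec_true _)). split; assumption.
    + intros Hin. apply nodup_In, filter_In in Hin. destruct Hin as [_ Hin].
      cbv beta in Hin. apply (proj1 (dec_true _)) in Hin. apply Hin.
  - intros f [<-|Hf]; [exact Hf0|]. apply in_map_iff in Hf. destruct Hf as [x [<- _]]. apply Hch.
  - exists f0. split; [left; reflexivity|exact Hf0n].
  - intros x Hall g Hg.
    destruct (reduce_2PI x) as [k [y [Hy Hxy]]].
    assert (Hper : forall h, I h -> h x = h y).
    { intros h Hh. rewrite Hxy. apply (periodic_Z h (proj2 (HIC h Hh))). }
    rewrite (Hper g Hg).
    assert (Hy0 : f0 y = 0) by (rewrite <- (Hper f0 Hf0); apply Hall; left; reflexivity).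
    assert (Hyl : In y l) by (apply Hzl; [lra|exact Hy0]).
    destruct (Hch y) as [Hchy [Hne|Hcz]].
    + exfalso. apply Hne. rewrite <- (Hper _ Hchy). apply Hall. right. apply in_map. exact Hyl.
    + apply Hcz, Hg.
Qed.

Definition Vf (p x : R) : R := 1 - cos (x - p).

Lemma Can_V p : Can (Vf p).
Proof.
  apply (Can_ext (fun x => 1 + (-1) * cos (x - p))).
  - apply Can_plus; [apply Can_const|apply Can_mult; [apply Can_const|apply Can_cos]].
  - intro x. unfold Vf. ring.
Qed.

Lemma cos1_int y : cos y = 1 -> exists k, y = 2 * PI * IZR k.
Proof.
  intro H. assert (HP := PI_RGT_0).
  destruct (reduce_2PI y) as [k [y' [Hy' Hyy]]]. exists k.
  assert (Hc : cos y' = 1).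
  { rewrite <- H, Hyy. symmetry. apply (periodic_Z cos). intro x. rewrite cos_plus, cos_2PI, sin_2PI. ring. }
  destruct (Req_dec y' 0) as [->|hne]; [lra|exfalso].
  destruct (Rle_dec y' PI) as [h|h].
  - assert (cos y' < cos 0) by (apply cos_decreasing_1; lra). rewrite cos_0 in *. lra.
  - assert (cos y' < cos (2 * PI)) by (apply cos_increasing_1; lra). rewrite cos_2PI in *. lra.
Qed.

Lemma cos1_sin0 y : cos y = 1 -> sin y = 0.
Proof.
  intro H. assert (Hs := sin2_cos2 y). rewrite H in Hs. unfold Rsqr in Hs.
  assert (sin y * sin y = 0) by lra. apply Rmult_integral in H0. tauto.
Qed.

Lemma ev_cos_series : forall t, is_pseries (PS_minus e1 (ev cos_n)) t (1 - cos t).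
Proof.
  intro t. assert (He : is_pseries e1 t 1).
  { rewrite <- (e1_val t). apply PSeries_correct, CV_radius_inside. rewrite e1_rad. exact I. }
  exact (is_pseries_minus e1 (ev cos_n) t 1 (cos t) He (cos_pser t)).
Qed.

Lemma V_eo z p : cos (z - p) = 1 -> eo (Vf p) z 2.
Proof.
  intro H. set (d := PS_minus e1 (ev cos_n)).
  assert (Hd : Rbar_le 1 (CV_radius d)).
  { apply radius_ge; [lra|]. intros t _. exists (1 - cos t). apply ev_cos_series. }
  assert (HF : forall x, Rabs (x - z) < 1 -> Vf p x = PSeries d (x - z)).
  { intros x _. unfold d. rewrite (is_pseries_unique _ _ _ (ev_cos_series (x - z))).
    unfold Vf. replace (x - p) with ((x - z) + (z - p)) by ring.
    rewrite cos_plus, H, (cos1_sin0 _ H). ring. }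
  assert (Hc0 : cos_n 0 = 1) by (unfold cos_n; simpl; field).
  assert (Hc1 : cos_n 1 = - / 2) by (unfold cos_n; simpl; field).
  destruct (LA_factor_d (Vf p) z 1 d 2 ltac:(lra) Hd HF) as [G [HG [HG0 HfG]]].
  { intros k Hk. unfold d, PS_minus, PS_plus, PS_opp. simpl.
    destruct k as [|[|k]]; [|simpl|lia].
    - change (e1 0 + - ev cos_n 0 = 0). unfold ev. simpl. rewrite Hc0. ring.
    - change (e1 1 + - ev cos_n 1 = 0). unfold ev. simpl. ring. }
  exists 1, G. split; [exact HG|]. split; [|exact HfG].
  rewrite HG0. unfold d, PS_minus, PS_plus, PS_opp.
  change (e1 2 + - ev cos_n 2 <> 0). unfold ev. simpl. rewrite Hc1. lra.
Qed.

Lemma V_zero_iff p x : Vf p x = 0 <-> cos (x - p) = 1.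
Proof. unfold Vf. split; intro; lra. Qed.

Lemma V_nonzero p : nonzero_fun (Vf p).
Proof. exists (p + PI). unfold Vf. replace (p + PI - p) with PI by ring. rewrite cos_PI. lra. Qed.

Lemma V_vt1 p : vt (Vf p) p 1.
Proof. apply zero_vt1; [apply Can_V|]. unfold Vf. rewrite Rminus_diag, cos_0. ring. Qed.

Lemma vt_pow f p n : vt f p 1 -> vt (fun x => f x ^ n) p n.
Proof.
  intro H. induction n.
  - exists 1, (fun _ => 1). split; [apply LA_const; lra|]. intros. simpl. ring.
  - replace (S n) with (1 + n)%nat by reflexivity. simpl.
    apply (vt_mult f (fun x => f x ^ n) p 1 n H IHn).
Qed.

Lemma eo_nonzero f p : Can f -> f p <> 0 -> eo f p 0.
Proof.
  intros Hf H. destruct (Can_LA f Hf p) as [r Hr]. exists r, f. split; [exact Hr|]. split; [exact H|].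
  intros. simpl. ring.
Qed.

Lemma eo_scal c f p m : c <> 0 -> eo f p m -> eo (fun x => c * f x) p m.
Proof.
  intros hc [r [G [HG [HG0 Hf]]]]. exists r, (fun x => c * G x). split; [|split].
  - apply LA_mult; [apply LA_const; destruct HG; assumption|exact HG].
  - apply Rmult_integral_contrapositive_currified; assumption.
  - intros x Hx. rewrite Hf by exact Hx. ring.
Qed.

Lemma vt_eq_nat f p a b : vt f p a -> a = b -> vt f p b.
Proof. intros H ->. exact H. Qed.

Lemma S1pt_int_eq p q k : S1pt p -> S1pt q -> p - q = 2 * PI * IZR k -> p = q.
Proof.
  intros Hp Hq H. unfold S1pt in *. assert (HP := PI_RGT_0).
  assert (Hk1 : -1 < IZR k).
  { apply Rmult_lt_reg_l with (2 * PI); [lra|]. lra. }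
  assert (Hk2 : IZR k < 1).
  { apply Rmult_lt_reg_l with (2 * PI); [lra|]. lra. }
  apply lt_IZR in Hk1. apply lt_IZR in Hk2. assert (k = 0%Z) by lia. subst. simpl in H. lra.
Qed.

Definition J (L : list (R * nat)) (g : R -> R) : Prop :=
  Can g /\ forall pa, In pa L -> vt g (fst pa) (snd pa).

Lemma idmul_mono (X X' Y Y' : (R -> R) -> Prop) h :
  (forall f, X f -> X' f) -> (forall g, Y g -> Y' g) -> idmul X Y h -> idmul X' Y' h.
Proof.
  intros HX HY H. induction H.
  - apply idmul0.
  - apply idmul_add; auto.
Qed.

Lemma idmul_sub (X Y Z : (R -> R) -> Prop) h :
  (forall f g, X f -> Y g -> Z (fun x => f x * g x)) -> Z (fun _ => 0) ->
  (forall f g, Z f -> Z g -> Z (fun x => f x + g x)) -> idmul X Y h -> Z h.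
Proof.
  intros Hm H0 Hp H. induction H.
  - exact H0.
  - apply (Hp (fun x => f x * g x) h); auto.
Qed.

Lemma J_zero L : J L (fun _ => 0).
Proof. split; [apply Can_const|]. intros. apply vt_zero. Qed.

Lemma J_plus L f g : J L f -> J L g -> J L (fun x => f x + g x).
Proof.
  intros [Hf1 Hf2] [Hg1 Hg2]. split; [apply Can_plus; assumption|].
  intros pa Hpa. apply vt_plus; auto.
Qed.

Lemma J_Canmul L h f : Can h -> J L f -> J L (fun x => h x * f x).
Proof.
  intros Hh [Hf1 Hf2]. split; [apply Can_mult; assumption|].
  intros pa Hpa. apply vt_Canmul; auto.
Qed.

Lemma J_ext L f g : J L f -> (forall x, f x = g x) -> J L g.
Proof. intros H E. replace g with f; [exact H|]. apply functional_extensionality, E. Qed.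

Lemma idmul_ext X Y f g : idmul X Y f -> (forall x, f x = g x) -> idmul X Y g.
Proof. intros H E. replace g with f; [exact H|]. apply functional_extensionality, E. Qed.

Lemma idmul2 (X Y : (R -> R) -> Prop) f1 g1 f2 g2 h :
  X f1 -> Y g1 -> X f2 -> Y g2 -> (forall x, h x = f1 x * g1 x + f2 x * g2 x) -> idmul X Y h.
Proof.
  intros H1 H2 H3 H4 E. eapply idmul_ext.
  - apply (idmul_add X Y f1 g1 (fun x => f2 x * g2 x + 0) H1 H2).
    apply (idmul_add X Y f2 g2 (fun _ => 0) H3 H4 (idmul0 X Y)).
  - intro x. simpl. rewrite E. ring.
Qed.

Lemma mideal_J p f : mideal p f <-> J ((p, 1%nat) :: nil) f.
Proof.
  split.
  - intros [Hf H0]. split; [exact Hf|]. intros pa [<-|[]]. apply zero_vt1; assumption.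
  - intros [Hf H]. split; [exact Hf|]. apply vt1_zero. apply (H (p, 1%nat)). left; reflexivity.
Qed.

Lemma J1 p a f : J ((p, a) :: nil) f <-> Can f /\ vt f p a.
Proof.
  split.
  - intros [Hf H]. split; [exact Hf|]. apply (H (p, a)). left; reflexivity.
  - intros [Hf H]. split; [exact Hf|]. intros pa [<-|[]]. exact H.
Qed.

Definition Tf (p x : R) : R := sin (x - p).

Lemma T_vt1 p : vt (Tf p) p 1.
Proof. apply zero_vt1; [apply Can_sin|]. unfold Tf. rewrite Rminus_diag, sin_0. reflexivity. Qed.

Lemma idpow_J p a : forall f, idpow (mideal p) a f <-> J ((p, a) :: nil) f.
Proof.
  induction a; intro f.
  - simpl. rewrite J1. split; [intro H; split; [exact H|apply vt_Can0, H]|intros [H _]; exact H].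
  - simpl. split.
    + intro H. apply (idmul_sub (mideal p) (idpow (mideal p) a)); [| |apply J_plus|exact H].
      * intros f1 g1 Hf1 Hg1. apply IHa in Hg1. apply J1 in Hg1. destruct Hg1 as [Hg1 Hg2].
        destruct Hf1 as [Hf1 Hf0]. apply J1. split; [apply Can_mult; assumption|].
        apply (vt_mult f1 g1 p 1 a); [apply zero_vt1; assumption|exact Hg2].
      * apply J_zero.
    + intro Hg. apply J1 in Hg. destruct Hg as [HgC Hgv].
      rename f into g.
      assert (HT : Can (Tf p)) by apply Can_sin.
      assert (HV : Can (Vf p)) by apply Can_V.
      set (u := fun x => g x * Tf p x). set (q := fun x => 2 * Vf p x).
      assert (Hu : Can u) by (apply Can_mult; assumption).
      assert (Hq : Can q) by (apply Can_mult; [apply Can_const|exact HV]).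
      assert (Hgp : g p = 0) by (apply vt1_zero, (vt_le g p (S a)); [exact Hgv|lia]).
      assert (Hqz : forall z, q z = 0 -> exists m, eo q z m /\ vt u z m).
      { intros z Hz. exists 2%nat. unfold q in Hz.
        assert (Hcz : cos (z - p) = 1) by (unfold Vf in Hz; lra).
        split.
        - apply eo_scal; [lra|]. apply V_eo, Hcz.
        - destruct (cos1_int _ Hcz) as [k Hk].
          assert (Hgz : g z = 0).
          { replace z with (p + 2 * PI * IZR k) by lra. rewrite (periodic_Z g (proj2 HgC)). exact Hgp. }
          apply (vt_mult g (Tf p) z 1 1).
          + apply zero_vt1; assumption.
          + apply zero_vt1; [exact HT|]. unfold Tf. apply cos1_sin0, Hcz. }
      destruct (div_Can u q Hu Hq Hqz) as [c [Hc Hcu]].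
      assert (Hcv : vt c p a).
      { apply (quot_vt c u q p 2 a Hc Hcu).
        - apply eo_scal; [lra|]. apply V_eo. rewrite Rminus_diag. apply cos_0.
        - apply (vt_eq_nat _ _ (S a + 1)); [|lia]. apply vt_mult; [exact Hgv|apply T_vt1]. }
      assert (Hqn : nonzero_fun q).
      { destruct (V_nonzero p) as [x0 Hx0]. exists x0. unfold q. intro h. apply Hx0. lra. }
      assert (Heq : forall x, g x = Tf p x * c x + Vf p x * (/ 2 * g x)).
      { intro x. set (D := fun x => Tf p x * c x + Vf p x * (/ 2 * g x) - g x).
        assert (HD : Can D).
        { apply (Can_ext (fun x => Tf p x * c x + Vf p x * (/ 2 * g x) + (-1) * g x)).
          - repeat apply Can_plus; repeat apply Can_mult; try assumption; apply Can_const.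
          - intro y. unfold D. ring. }
        assert (HD0 : forall y, D y * q y = 0).
        { intro y. unfold D.
          replace ((Tf p y * c y + Vf p y * (/ 2 * g y) - g y) * q y)
            with (Tf p y * (c y * q y) + (Vf p y * (/ 2 * g y) - g y) * q y) by ring.
          rewrite <- Hcu. unfold u, q, Tf, Vf.
          assert (Hs := sin2_cos2 (y - p)). unfold Rsqr in Hs.
          transitivity (g y * (sin (y - p) * sin (y - p) + cos (y - p) * cos (y - p) - 1)); [field|].
          rewrite Hs. ring. }
        assert (E := zero_product D q HD Hq Hqn HD0 x). unfold D in E. lra. }
      apply (idmul2 _ _ (Tf p) c (Vf p) (fun x => / 2 * g x) g).
      * split; [exact HT|]. unfold Tf. rewrite Rminus_diag. apply sin_0.
      * apply IHa. apply J1. split; assumption.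
      * split; [exact HV|]. unfold Vf. rewrite Rminus_diag, cos_0. ring.
      * apply IHa. apply J1. split; [apply Can_mult; [apply Can_const|exact HgC]|].
        apply vt_Canmul; [apply Can_const|]. apply (vt_le g p (S a)); [exact Hgv|lia].
      * exact Heq.
Qed.

Definition prodV (L : list (R * nat)) (x : R) : R :=
  fold_right (fun pa acc => Vf (fst pa) x ^ snd pa * acc) 1 L.

Lemma Can_prodV L : Can (prodV L).
Proof.
  induction L as [|pa L IH].
  - apply Can_const.
  - apply (Can_mult (fun x => Vf (fst pa) x ^ snd pa) (prodV L)); [apply Can_pow, Can_V|exact IH].
Qed.

Lemma prodV_vt L : forall pa, In pa L -> vt (prodV L) (fst pa) (snd pa).
Proof.
  induction L as [|[q b] L IH]; intros pa Hpa; [destruct Hpa|].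
  destruct Hpa as [<-|Hpa].
  - simpl. apply (vt_eq_nat _ _ (b + 0)); [|lia].
    apply (vt_mult (fun x => Vf q x ^ b) (prodV L)); [apply vt_pow, V_vt1|apply vt_Can0, Can_prodV].
  - apply (vt_eq_nat _ _ (0 + snd pa)); [|lia].
    apply (vt_mult (fun x => Vf q x ^ b) (prodV L)); [apply vt_Can0, Can_pow, Can_V|apply IH, Hpa].
Qed.

Lemma pow_zero_base x n : x ^ n = 0 -> x = 0.
Proof. intro H. apply NNPP. intro h. exact (pow_nonzero x n h H). Qed.

Lemma prodV_zero L x : prodV L x = 0 -> exists pa, In pa L /\ cos (x - fst pa) = 1.
Proof.
  induction L as [|[q b] L IH]; simpl; intro H.
  - lra.
  - apply Rmult_integral in H. destruct H as [H|H].
    + exists (q, b). split; [left; reflexivity|]. apply pow_zero_base in H. unfold Vf in H. simpl. lra.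
    + destruct (IH H) as [pa [Hpa Hc]]. exists pa. split; [right; exact Hpa|exact Hc].
Qed.

Lemma J_cons p a L g : S1pt p -> (forall pa, In pa L -> S1pt (fst pa)) -> ~ In p (map fst L) ->
  (J ((p, a) :: L) g <-> idmul (J ((p, a) :: nil)) (J L) g).
Proof.
  intros Hp HL Hnin. split.
  - intros [HgC Hgv].
    set (A := fun x => Vf p x ^ a). set (B := prodV L).
    set (D := fun x => A x * A x + B x * B x).
    assert (HA : Can A) by (apply Can_pow, Can_V).
    assert (HB : Can B) by apply Can_prodV.
    assert (HD : Can D) by (apply Can_plus; apply Can_mult; assumption).
    assert (HDn : forall x, D x <> 0).
    { intros x Hx. unfold D in Hx.
      assert (HAx : A x = 0) by nra. assert (HBx : B x = 0) by nra.
      unfold A in HAx. apply pow_zero_base in HAx. unfold Vf in HAx.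
      destruct (prodV_zero L x HBx) as [[q b] [Hqb Hc]]. simpl in Hc.
      destruct (cos1_int (x - p)) as [k1 Hk1]; [lra|].
      destruct (cos1_int _ Hc) as [k2 Hk2].
      assert (Hqp : q = p).
      { apply (S1pt_int_eq q p (k1 - k2)); [apply (HL (q, b) Hqb)|exact Hp|].
        rewrite minus_IZR. lra. }
      apply Hnin. rewrite <- Hqp. apply (in_map fst L (q, b)). exact Hqb. }
    assert (Hnz : forall z, D z = 0 -> exists m, eo D z m /\ vt (fun x => A x * g x) z m)
      by (intros z Hz; exfalso; exact (HDn z Hz)).
    assert (Hnz2 : forall z, D z = 0 -> exists m, eo D z m /\ vt (fun x => B x * g x) z m)
      by (intros z Hz; exfalso; exact (HDn z Hz)).
    destruct (div_Can (fun x => A x * g x) D (Can_mult _ _ HA HgC) HD Hnz) as [c1 [Hc1 Hc1e]].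
    destruct (div_Can (fun x => B x * g x) D (Can_mult _ _ HB HgC) HD Hnz2) as [c2 [Hc2 Hc2e]].
    apply (idmul2 _ _ A c1 c2 B g).
    + apply J1. split; [exact HA|]. apply vt_pow, V_vt1.
    + split; [exact Hc1|]. intros [q b] Hqb. simpl.
      apply (quot_vt c1 (fun x => A x * g x) D q 0 b Hc1 Hc1e).
      * apply eo_nonzero; [exact HD|apply HDn].
      * apply vt_Canmul; [exact HA|]. apply (Hgv (q, b)). right. exact Hqb.
    + apply J1. split; [exact Hc2|].
      apply (quot_vt c2 (fun x => B x * g x) D p 0 a Hc2 Hc2e).
      * apply eo_nonzero; [exact HD|apply HDn].
      * apply vt_Canmul; [exact HB|]. apply (Hgv (p, a)). left. reflexivity.
    + split; [exact HB|]. apply prodV_vt.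
    + intro x. apply Rmult_eq_reg_r with (D x); [|apply HDn].
      transitivity (A x * (c1 x * D x) + B x * (c2 x * D x)); [|ring].
      rewrite <- Hc1e, <- Hc2e. unfold D. ring.
  - intro H. apply (idmul_sub (J ((p, a) :: nil)) (J L)); [| |apply J_plus|exact H].
    + intros f h Hf Hh. apply J1 in Hf. destruct Hf as [HfC Hfv]. destruct Hh as [HhC Hhv].
      split; [apply Can_mult; assumption|]. intros pa [<-|Hpa].
      * simpl. apply (vt_eq_nat _ _ (a + 0)); [|lia]. apply vt_mult; [exact Hfv|apply vt_Can0, HhC].
      * apply (vt_eq_nat _ _ (0 + snd pa)); [|lia]. apply vt_mult; [apply vt_Can0, HfC|apply Hhv, Hpa].
    + apply J_zero.
Qed.

Lemma mprod_J L : NoDup (map fst L) -> (forall pa, In pa L -> S1pt (fst pa)) ->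
  forall g, mprod L g <-> J L g.
Proof.
  induction L as [|[p a] L IH]; intros Hnd HL g.
  - unfold mprod. simpl. split; [intro H; split; [exact H|intros _ []]|intros [H _]; exact H].
  - simpl in Hnd. inversion Hnd as [|? ? Hnin Hnd']; subst.
    assert (HL' : forall pa, In pa L -> S1pt (fst pa)) by (intros pa Hpa; apply HL; right; exact Hpa).
    change (mprod ((p, a) :: L) g) with (idmul (idpow (mideal p) a) (mprod L) g).
    rewrite (J_cons p a L g (HL (p, a) (or_introl eq_refl)) HL' Hnin).
    split; apply idmul_mono; intros f Hf.
    + apply idpow_J, Hf.
    + apply (IH Hnd' HL'), Hf.
    + apply idpow_J, Hf.
    + apply (IH Hnd' HL'), Hf.
Qed.

Lemma sumsq_nonneg l x : 0 <= sumsq l x.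
Proof. induction l; simpl; [lra|]. assert (0 <= a x * a x) by nra. lra. Qed.

Lemma sumsq_zero l x : sumsq l x = 0 -> forall f, In f l -> f x = 0.
Proof.
  induction l as [|g l IH]; simpl; intros H f Hf; [destruct Hf|].
  assert (H1 := sumsq_nonneg l x). assert (0 <= g x * g x) by nra.
  destruct Hf as [<-|Hf].
  - nra.
  - apply IH; [lra|exact Hf].
Qed.

Lemma sumsq_in I l : is_ideal I -> (forall f, In f l -> I f) -> I (sumsq l).
Proof.
  intros [HIC [HI0 [HIp HIm]]]. induction l as [|f l IH]; intro Hl.
  - exact HI0.
  - simpl. apply (HIp (fun x => f x * f x) (sumsq l)).
    + apply HIm; [apply HIC|]; apply Hl; left; reflexivity.
    + apply IH. intros g Hg. apply Hl. right. exact Hg.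
Qed.

Lemma vt_shift f p a k : (forall x, f (x + 2 * PI) = f x) -> vt f p a -> vt f (p + 2 * PI * IZR k) a.
Proof.
  intros Hper [r [G [HG Hf]]]. exists r, (fun x => G (x - 2 * PI * IZR k)). split.
  - apply LA_shift, HG.
  - intros x Hx.
    assert (E : f x = f (x - 2 * PI * IZR k)).
    { rewrite <- (periodic_Z f Hper k (x - 2 * PI * IZR k)). f_equal. ring. }
    rewrite E, Hf.
    + replace (x - (p + 2 * PI * IZR k)) with (x - 2 * PI * IZR k - p) by ring. reflexivity.
    + replace (x - 2 * PI * IZR k - p) with (x - (p + 2 * PI * IZR k)) by ring. exact Hx.
Qed.

Lemma eo_shift f p a k : (forall x, f (x + 2 * PI) = f x) -> eo f p a -> eo f (p + 2 * PI * IZR k) a.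
Proof.
  intros Hper [r [G [HG [HG0 Hf]]]]. exists r, (fun x => G (x - 2 * PI * IZR k)). split; [|split].
  - apply LA_shift, HG.
  - replace (p + 2 * PI * IZR k - 2 * PI * IZR k) with p by ring. exact HG0.
  - intros x Hx.
    assert (E : f x = f (x - 2 * PI * IZR k)).
    { rewrite <- (periodic_Z f Hper k (x - 2 * PI * IZR k)). f_equal. ring. }
    rewrite E, Hf.
    + replace (x - (p + 2 * PI * IZR k)) with (x - 2 * PI * IZR k - p) by ring. reflexivity.
    + replace (x - 2 * PI * IZR k - p) with (x - (p + 2 * PI * IZR k)) by ring. exact Hx.
Qed.

Lemma combo (I : (R -> R) -> Prop) g q Gs : is_ideal I ->
  (forall j, In j Gs -> I j /\ exists c, Can c /\ forall x, g x * j x = c x * q x) ->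
  exists S, I S /\ forall x, S x * q x = g x * sumsq Gs x.
Proof.
  intros HI. destruct HI as [HIC [HI0 [HIp HIm]]] eqn:EHI. clear EHI.
  induction Gs as [|j Gs IH]; intro H.
  - exists (fun _ => 0). split; [exact HI0|]. intros. simpl. ring.
  - destruct IH as [S' [HS' HS'e]]. { intros j' Hj'. apply H. right. exact Hj'. }
    destruct (H j (or_introl eq_refl)) as [Hj [c [Hc Hce]]].
    exists (fun x => c x * j x + S' x). split.
    + apply HIp; [apply HIm; assumption|exact HS'].
    + intro x. simpl. specialize (HS'e x). specialize (Hce x).
      transitivity (j x * (c x * q x) + S' x * q x); [ring|]. rewrite <- Hce, HS'e. ring.
Qed.

Theorem theorem1 (I : (R -> R) -> Prop) :
  is_ideal I ->
  (exists f, I f /\ nonzero_fun f) ->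
  (exists g, Can g /\ ~ I g) ->
  exists l : list (R * nat),
    NoDup (map fst l) /\
    (forall pa, In pa l -> S1pt (fst pa) /\ (1 <= snd pa)%nat) /\
    (forall f, I f <-> mprod l f) /\
    (forall x, S1pt x -> ((forall f, I f -> f x = 0) <-> In x (map fst l))) /\
    (forall pa, In pa l ->
       (exists f, I f /\ nonzero_fun f /\ vanish_order f (fst pa) (snd pa)) /\
       (forall f m, I f -> nonzero_fun f -> vanish_order f (fst pa) m ->
          (snd pa <= m)%nat)).
Proof.
  intros HI Hnz _.
  destruct Hnz as [f0 [Hf0 Hf0n]].
  assert (HI' := HI). destruct HI' as [HIC [HI0 [HIp HIm]]].
  destruct (common_zeros I HI (ex_intro _ f0 (conj Hf0 Hf0n))) as
      [P [Fs [HPnd [HPs [HPz [HFs [HFsn HFsz]]]]]]].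
  set (Am := fun p m => (exists f, I f /\ nonzero_fun f /\ eo f p m) /\
                        forall f m', I f -> nonzero_fun f -> eo f p m' -> (m <= m')%nat).
  assert (HAex : forall p, exists m, Am p m).
  { intro p. destruct (nonzero_order f0 p (HIC f0 Hf0) Hf0n) as [r [m0 [G [HG [HG0 HfG]]]]].
    destruct (least_nat (fun m => exists f, I f /\ nonzero_fun f /\ eo f p m)) as [m [Hm Hlt]].
    { exists m0, f0. split; [exact Hf0|]. split; [exact Hf0n|]. exists r, G. auto. }
    exists m. split; [exact Hm|]. intros f m' Hf Hfn Heo.
    destruct (Nat.le_gt_cases m m') as [h|h]; [exact h|].
    exfalso. apply (Hlt m' h). exists f. auto. }
  set (a := fun p => epsilon (inhabits 0%nat) (Am p)).
  assert (Ha : forall p, Am p (a p)) by (intro p; apply epsilon_spec, HAex).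
  set (l := map (fun p => (p, a p)) P).
  assert (Hfst : map fst l = P).
  { unfold l. rewrite map_map. simpl. apply map_id. }
  assert (Hinl : forall pa, In pa l -> In (fst pa) P /\ snd pa = a (fst pa)).
  { intros pa Hpa. unfold l in Hpa. apply in_map_iff in Hpa. destruct Hpa as [p [<- Hp]]. simpl. auto. }
  assert (HlS : forall pa, In pa l -> S1pt (fst pa)).
  { intros pa Hpa. apply HPs, Hinl, Hpa. }
  assert (HIJ : forall f, I f -> J l f).
  { intros f Hf. split; [apply HIC, Hf|]. intros pa Hpa.
    destruct (Hinl pa Hpa) as [_ ->].
    destruct (classic (nonzero_fun f)) as [Hfn|Hfn].
    - destruct (nonzero_order f (fst pa) (HIC f Hf) Hfn) as [r [m [G [HG [HG0 HfG]]]]].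
      assert (Heo : eo f (fst pa) m) by (exists r, G; auto).
      apply (vt_le f (fst pa) m); [apply eo_vt, Heo|].
      apply ((proj2 (Ha (fst pa))) f m Hf Hfn Heo).
    - replace f with (fun _ : R => 0); [apply vt_zero|].
      apply functional_extensionality. intro x. apply NNPP. intro h. apply Hfn. exists x. auto. }
  exists l. split; [|split; [|split; [|split]]].
  - rewrite Hfst. exact HPnd.
  - intros pa Hpa. split; [apply HlS, Hpa|].
    destruct (Hinl pa Hpa) as [HpP ->].
    destruct (proj1 (Ha (fst pa))) as [f [Hf [Hfn Heo]]].
    destruct (a (fst pa)) eqn:Ea; [|lia]. exfalso.
    destruct Heo as [r [G [HG [HG0 HfG]]]].
    assert (Hz : f (fst pa) = 0) by (apply (HPz (fst pa) (HPs _ HpP)); [exact HpP|exact Hf]).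
    rewrite HfG in Hz; [simpl in Hz; lra|]. rewrite Rminus_diag, Rabs_R0. destruct HG; assumption.
  - intro g. rewrite (mprod_J l ltac:(rewrite Hfst; exact HPnd) HlS). split; [apply HIJ|].
    intros [HgC Hgv].
    set (wit := fun p => epsilon (inhabits f0) (fun f => I f /\ nonzero_fun f /\ eo f p (a p))).
    assert (Hwit : forall p, I (wit p) /\ nonzero_fun (wit p) /\ eo (wit p) p (a p))
      by (intro p; apply epsilon_spec, (proj1 (Ha p))).
    set (Gs := map wit P ++ Fs).
    assert (HGs : forall j, In j Gs -> I j).
    { intros j Hj. apply in_app_or in Hj. destruct Hj as [Hj|Hj].
      - apply in_map_iff in Hj. destruct Hj as [p [<- _]]. apply Hwit.
      - apply HFs, Hj. }
    set (q := sumsq Gs).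
    assert (HqI : I q) by (apply sumsq_in; assumption).
    assert (HqC : Can q) by (apply HIC, HqI).
    assert (Hqn : nonzero_fun q).
    { destruct HFsn as [f1 [Hf1 [x1 Hx1]]]. exists x1. intro h. apply Hx1.
      apply (sumsq_zero Gs x1 h). apply in_or_app. right. exact Hf1. }
    assert (Hzq : forall z, q z = 0 -> exists y k, In y P /\ z = y + 2 * PI * IZR k).
    { intros z Hz.
      assert (Hcz : forall h, I h -> h z = 0).
      { apply HFsz. intros f Hf. apply (sumsq_zero Gs z Hz). apply in_or_app. right. exact Hf. }
      destruct (reduce_2PI z) as [k [y [Hy Hzy]]]. exists y, k. split; [|exact Hzy].
      apply HPz; [exact Hy|]. intros h Hh. rewrite <- (Hcz h Hh), Hzy.
      symmetry. apply (periodic_Z h (proj2 (HIC h Hh))). }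
    assert (HgP : forall y, In y P -> vt g y (a y)).
    { intros y Hy. apply (Hgv (y, a y)). unfold l. apply in_map_iff. exists y. auto. }
    assert (Hdiv : forall j, In j Gs -> exists c, Can c /\ forall x, g x * j x = c x * q x).
    { intros j Hj.
      destruct (div_Can (fun x => g x * j x) q (Can_mult _ _ HgC (HIC j (HGs j Hj))) HqC) as [c [Hc Hce]].
      - intros z Hz. destruct (Hzq z Hz) as [y [k [Hy ->]]].
        exists (a y + a y)%nat. split.
        + apply eo_shift; [apply (proj2 HqC)|]. apply sqo_eo.
          assert (Hs := sumsq_sqo Gs y (a y)).
          destruct Hs as [r [G [HG [Hnn [Hst Heq]]]]].
          { intros f Hf. apply (proj2 (HIJ f (HGs f Hf)) (y, a y)). unfold l. apply in_map_iff. exists y. auto. }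
          exists r, G. split; [exact HG|]. split; [exact Hnn|]. split; [|exact Heq].
          intros _. apply Hst. exists (wit y). split; [apply in_or_app; left; apply in_map; exact Hy|apply Hwit].
        + apply vt_shift; [apply (proj2 (Can_mult _ _ HgC (HIC j (HGs j Hj))))|].
          apply vt_mult; [apply HgP, Hy|].
          apply (proj2 (HIJ j (HGs j Hj)) (y, a y)). unfold l. apply in_map_iff. exists y. auto.
      - exists c. split; [exact Hc|exact Hce]. }
    destruct (combo I g q Gs HI) as [S [HS HSe]].
    { intros j Hj. split; [apply HGs, Hj|apply Hdiv, Hj]. }
    assert (HSg : forall x, S x = g x).
    { intro x. assert (HD : Can (fun x => S x + (-1) * g x)).
      { apply Can_plus; [apply HIC, HS|apply Can_mult; [apply Can_const|exact HgC]]. }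
      assert (E := zero_product (fun x => S x + (-1) * g x) q HD HqC Hqn).
      assert (E' : S x + (-1) * g x = 0).
      { apply E. intro y. rewrite Rmult_plus_distr_r, HSe. fold q. ring. }
      lra. }
    replace g with S; [exact HS|]. apply functional_extensionality, HSg.
  - intros x Hx. rewrite Hfst. apply HPz, Hx.
  - intros pa Hpa. destruct (Hinl pa Hpa) as [_ ->]. split.
    + destruct (proj1 (Ha (fst pa))) as [f [Hf [Hfn Heo]]].
      exists f. split; [exact Hf|]. split; [exact Hfn|]. apply eo_vanish_order, Heo.
    + intros f m Hf Hfn Hvo. apply ((proj2 (Ha (fst pa))) f m Hf Hfn). apply vanish_order_eo, Hvo.
Qed.
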